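(* A nonzero tensor $A\in\mathrm{Sym}^d(\mathbb{R}^n)$ is critical in $\mathrm{Sym}^d(\mathbb{R}^n)$ if and only if there exist $r\in\mathbb{N}$, symmetric best rank-one approximations $Y_1,\dots,Y_r$ of $A$, and coefficients $\alpha_1,\dots,\alpha_r>0$ with $\sum_\ell\alpha_\ell=1$, such that \[ \Big(\frac{\|A\|_2}{\|A\|_F}\Big)^2A=\sum_{\ell=1}^r\alpha_\ell Y_\ell. \] In this case $A$ is also critical in the full space $\otimes_{j=1}^d\mathbb{R}^n$.
   Context: Tensors and norms: \begin{itemize} \item $\mathrm{Sym}^d(\mathbb{R}^n)$ is the space of real $n^d$-tensors invariant under permutation of indices. \item The Frobenius inner product is $\langle A,A'\rangle_F=\sum a_{i_1\dots i_d}a'_{i_1\dots i_d}$, with norm $\|\cdot\|_F$. \item The spectral norm is $\|A\|_2=\max_{\|x^{(j)}\|=1}\langle A,x^{(1)}\otimes\cdots\otimes x^{(d)}\rangle_F$. \end{itemize} A best rank-one approximation of $A$ is a rank-one tensor $Y$ minimizing $\|A-X\|_F$ over all rank-one tensors $X$. It is symmetric if it has the form $\lambda\,y\otimes\cdots\otimes y$. Generalized gradient (Clarke): for a Lipschitz function $f$ on a Euclidean space, the generalized gradient $\partial f(p)$ is the convex hull of all limits of gradients $\nabla f(p_i)$, taken over sequences $p_i\to p$ of differentiability points. Criticality: \begin{itemize} \item A nonzero $A\in\mathrm{Sym}^d(\mathbb{R}^n)$ is critical in $\mathrm{Sym}^d(\mathbb{R}^n)$ if $\lambda A\in\partial g(A/\|A\|_F)$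 for some $\lambda\in\mathbb{R}$, where $g$ is the spectral norm regarded as a function on the Euclidean space $(\mathrm{Sym}^d(\mathbb{R}^n),\langle\cdot,\cdot\rangle_F)$. \item $A$ is critical in $\otimes_{j=1}^d\mathbb{R}^n$ if the same holds with the spectral norm regarded as a function on the full tensor space. \end{itemize} *)

(* Defs.v *)
From Stdlib Require Import Reals Lra List Permutation ClassicalEpsilon.
Import ListNotations.
Open Scope R_scope.

(* A tensor in (R^n)^{⊗d} is represented by its entries, a function from
   multi-indices (lists of naturals) to R; only the entries at the
   multi-indices in [idx d n] (lists of length d with entries < n) matter. *)
Definition tensor := list nat -> R.

Fixpoint idx (d n : nat) : list (list nat) :=
  match d with
  | O => [ [] ]
  | S d' => concat (map (fun i => map (cons i) (idx d' n)) (seq 0 n))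
  end.

Definition lsum {A : Type} (s : list A) (f : A -> R) : R :=
  fold_right Rplus 0 (map f s).

Definition rsum (r : nat) (f : nat -> R) : R := lsum (seq 0 r) f.

Definition teq (d n : nat) (A B : tensor) : Prop :=
  forall l, In l (idx d n) -> A l = B l.

Definition tzero : tensor := fun _ => 0.
Definition tadd (A B : tensor) : tensor := fun l => A l + B l.
Definition tscale (c : R) (A : tensor) : tensor := fun l => c * A l.
Definition tsub (A B : tensor) : tensor := fun l => A l - B l.

Definition frob_ip (d n : nat) (A B : tensor) : R :=
  lsum (idx d n) (fun l => A l * B l).
Definition frob (d n : nat) (A : tensor) : R := sqrt (frob_ip d n A A).

(* vectors in R^n: functions nat -> R, coordinates 0..n-1 *)
Definition unit_vec (n : nat) (x : nat -> R) : Prop :=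
  lsum (seq 0 n) (fun i => x i * x i) = 1.

Fixpoint outer_from (xs : nat -> nat -> R) (j : nat) (l : list nat) : R :=
  match l with
  | [] => 1
  | i :: l' => xs j i * outer_from xs (S j) l'
  end.
Definition outer (xs : nat -> nat -> R) : tensor := outer_from xs 0.

Definition spec_values (d n : nat) (A : tensor) (v : R) : Prop :=
  exists xs : nat -> nat -> R,
    (forall j, (j < d)%nat -> unit_vec n (xs j)) /\ v = frob_ip d n A (outer xs).

Definition spec_norm (d n : nat) (A : tensor) : R :=
  epsilon (inhabits 0) (fun s => is_lub (spec_values d n A) s).

Definition is_sym (d n : nat) (A : tensor) : Prop :=
  forall l l', In l (idx d n) -> Permutation l l' -> A l = A l'.

Definition full_space (d n : nat) (A : tensor) : Prop := True.

Definition rank_one (d n : nat) (X : tensor) : Prop :=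
  (exists xs : nat -> nat -> R, teq d n X (outer xs)) /\ ~ teq d n X tzero.

Definition best_rank_one_approx (d n : nat) (A Y : tensor) : Prop :=
  rank_one d n Y /\
  forall X, rank_one d n X -> frob d n (tsub A Y) <= frob d n (tsub A X).

Definition symmetric_rank_one_form (d n : nat) (Y : tensor) : Prop :=
  exists (lam : R) (y : nat -> R),
    teq d n Y (tscale lam (outer (fun _ => y))).

(* Calculus on the Euclidean space (V, <.,.>_F), V a linear subspace of
   tensors given by a predicate. *)
Definition tconv (d n : nat) (p : nat -> tensor) (q : tensor) : Prop :=
  forall eps, eps > 0 -> exists N, forall k, (k >= N)%nat ->
    frob d n (tsub (p k) q) < eps.

Definition is_grad (d n : nat) (V : tensor -> Prop) (g : tensor -> R)
  (p G : tensor) : Prop :=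
  V G /\
  forall eps, eps > 0 -> exists delta, delta > 0 /\
    forall h, V h -> frob d n h < delta ->
      Rabs (g (tadd p h) - g p - frob_ip d n G h) <= eps * frob d n h.

Definition limit_grad (d n : nat) (V : tensor -> Prop) (g : tensor -> R)
  (p L : tensor) : Prop :=
  exists (ps Gs : nat -> tensor),
    (forall k, V (ps k) /\ is_grad d n V g (ps k) (Gs k)) /\
    tconv d n ps p /\ tconv d n Gs L.

(* Clarke generalized gradient: convex hull of the limiting gradients *)
Definition clarke_grad (d n : nat) (V : tensor -> Prop) (g : tensor -> R)
  (p Z : tensor) : Prop :=
  exists (r : nat) (c : nat -> R) (Ls : nat -> tensor),
    (forall k, (k < r)%nat -> 0 <= c k /\ limit_grad d n V g p (Ls k)) /\
    rsum r c = 1 /\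
    teq d n Z (fun l => rsum r (fun k => c k * Ls k l)).

Definition critical (d n : nat) (V : tensor -> Prop) (A : tensor) : Prop :=
  ~ teq d n A tzero /\
  exists lam : R,
    clarke_grad d n V (spec_norm d n)
      (tscale (/ frob d n A) A) (tscale lam A).

(* Main.v *)
Require Import Defs.
From Stdlib Require Import Reals Lra List Permutation ClassicalEpsilon Lia FunctionalExtensionality.
Import ListNotations.
Open Scope R_scope.

Lemma lsum_nil {A} (f : A -> R) : lsum [] f = 0.
Proof. reflexivity. Qed.
Lemma lsum_cons {A} (a : A) s f : lsum (a :: s) f = f a + lsum s f.
Proof. reflexivity. Qed.
Lemma lsum_app {A} (s t : list A) f : lsum (s ++ t) f = lsum s f + lsum t f.
Proof. induction s; simpl; [unfold lsum; simpl; ring|]. rewrite !lsum_cons, IHs. ring. Qed.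
Lemma lsum_plus {A} (s : list A) f g : lsum s (fun x => f x + g x) = lsum s f + lsum s g.
Proof. induction s; [unfold lsum; simpl; ring|]. rewrite !lsum_cons, IHs. ring. Qed.
Lemma lsum_scal {A} (s : list A) c f : lsum s (fun x => c * f x) = c * lsum s f.
Proof. induction s; [unfold lsum; simpl; ring|]. rewrite !lsum_cons, IHs. ring. Qed.
Lemma lsum_ext {A} (s : list A) f g : (forall x, In x s -> f x = g x) -> lsum s f = lsum s g.
Proof. induction s; intros H; [reflexivity|]. rewrite !lsum_cons. f_equal; [apply H; now left| apply IHs; intros; apply H; now right]. Qed.
Lemma lsum_minus {A} (s : list A) f g : lsum s (fun x => f x - g x) = lsum s f - lsum s g.
Proof. induction s; [unfold lsum; simpl; ring|]. rewrite !lsum_cons, IHs. ring. Qed.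
Lemma lsum_zero {A} (s : list A) : lsum s (fun _ => 0) = 0.
Proof. induction s; [reflexivity|]. rewrite lsum_cons, IHs. ring. Qed.
Lemma lsum_nonneg {A} (s : list A) f : (forall x, In x s -> 0 <= f x) -> 0 <= lsum s f.
Proof. induction s; intros H; [unfold lsum; simpl; lra|]. rewrite lsum_cons.
  assert (0 <= f a) by (apply H; now left). assert (0 <= lsum s f) by (apply IHs; intros; apply H; now right). lra. Qed.
Lemma lsum_le {A} (s : list A) f g : (forall x, In x s -> f x <= g x) -> lsum s f <= lsum s g.
Proof. induction s; intros H; [unfold lsum; simpl; lra|]. rewrite !lsum_cons.
  assert (f a <= g a) by (apply H; now left). assert (lsum s f <= lsum s g) by (apply IHs; intros; apply H; now right). lra. Qed.
Lemma lsum_map {A B} (h : A -> B) s f : lsum (map h s) f = lsum s (fun x => f (h x)).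
Proof. unfold lsum. now rewrite map_map. Qed.
Lemma lsum_concat_map {A B} (F : A -> list B) s f :
  lsum (concat (map F s)) f = lsum s (fun x => lsum (F x) f).
Proof. induction s; [reflexivity|]. simpl. rewrite lsum_app, lsum_cons, IHs. reflexivity. Qed.
Lemma lsum_perm {A} (s t : list A) f : Permutation s t -> lsum s f = lsum t f.
Proof. intros H; induction H; auto.
  - rewrite !lsum_cons, IHPermutation; reflexivity.
  - rewrite !lsum_cons; ring.
  - congruence. Qed.
Lemma lsum_zero_inv {A} (s : list A) f : (forall x, In x s -> 0 <= f x) -> lsum s f = 0 -> forall x, In x s -> f x = 0.
Proof. induction s; intros H Hs x Hx; [destruct Hx|]. rewrite lsum_cons in Hs.
  assert (0 <= f a) by (apply H; now left). assert (0 <= lsum s f) by (apply lsum_nonneg; intros; apply H; now right).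
  destruct Hx as [<-|Hx]; [lra|]. apply IHs; auto; [intros; apply H; now right| lra]. Qed.

Lemma In_idx d n l : In l (idx d n) <-> length l = d /\ Forall (fun i => (i < n)%nat) l.
Proof. revert l; induction d; intros l; simpl.
  - split; [intros [<-|[]]; split; auto|]. intros [H _]; destruct l; [now left| discriminate].
  - rewrite in_concat. split.
    + intros [s [Hs Hl]]. apply in_map_iff in Hs as [i [<- Hi]]. apply in_map_iff in Hl as [m [<- Hm]].
      apply IHd in Hm as [H1 H2]. apply in_seq in Hi. simpl. split; auto. constructor; auto; lia.
    + intros [H1 H2]. destruct l as [|i m]; [discriminate|]. inversion H2; subst.
      exists (map (cons i) (idx d n)). split. apply in_map_iff. exists i; split; auto. apply in_seq; lia.
      apply in_map. apply IHd. simpl in H1; split; auto. Qed.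

Lemma NoDup_cons_concat (L : list (list nat)) (s : list nat) : NoDup s -> NoDup L ->
  NoDup (concat (map (fun i => map (cons i) L) s)).
Proof. induction s as [|a s IH]; intros Hs HL; simpl. constructor. inversion Hs as [|a0 s0 Hna Hnd]; subst.
  apply NoDup_app. apply NoDup_map_NoDup_ForallPairs; auto. intros x y _ _ H; now inversion H.
  apply IH; auto. intros x G1 G2. apply in_map_iff in G1 as [m [<- _]]. apply in_concat in G2 as [t [Ht Hl]].
  apply in_map_iff in Ht as [i [<- Hi]]. apply in_map_iff in Hl as [m' [E _]]. inversion E; subst. contradiction. Qed.

Lemma NoDup_idx d n : NoDup (idx d n).
Proof. induction d; simpl. constructor; auto; constructor.
  apply NoDup_cons_concat; auto. apply seq_NoDup. Qed.

Lemma idx_S d n f : lsum (idx (S d) n) f = lsum (seq 0 n) (fun i => lsum (idx d n) (fun l => f (i :: l))).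
Proof. simpl. rewrite lsum_concat_map. apply lsum_ext. intros. apply lsum_map. Qed.

Lemma idx_nonempty_0 d : (1 <= d)%nat -> idx d 0 = [].
Proof. destruct d; [lia|]. reflexivity. Qed.

Lemma rsum_S r f : rsum (S r) f = rsum r f + f r.
Proof. unfold rsum. rewrite seq_S, lsum_app. unfold lsum at 2. simpl. ring. Qed.
Lemma rsum_0 f : rsum 0 f = 0.
Proof. reflexivity. Qed.
Lemma rsum_ext r f g : (forall k, (k < r)%nat -> f k = g k) -> rsum r f = rsum r g.
Proof. intros H; apply lsum_ext. intros x Hx; apply in_seq in Hx; apply H; lia. Qed.

Definition gip {A} (s : list A) (f g : A -> R) := lsum s (fun x => f x * g x).

Lemma gip_sym {A} (s : list A) f g : gip s f g = gip s g f.
Proof. unfold gip. apply lsum_ext; intros; ring. Qed.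
Lemma gip_self_nonneg {A} (s : list A) f : 0 <= gip s f f.
Proof. apply lsum_nonneg; intros; nra. Qed.

Lemma quad_disc a b c : 0 <= c -> (forall t, 0 <= a - 2 * t * b + t * t * c) -> b * b <= a * c.
Proof. intros Hc H. destruct (Req_dec c 0) as [E|E].
  - subst. destruct (Req_dec b 0) as [Eb|Eb]; [subst; nra|].
    specialize (H ((a+1)/(2*b))). assert (E2: 2 * ((a+1)/(2*b)) * b = a+1) by (field; auto). rewrite E2 in H. lra.
  - specialize (H (b / c)). assert (0 < c) by lra.
    assert (0 <= (a - 2 * (b/c) * b + (b/c)*(b/c)*c) * c) by (apply Rmult_le_pos; lra).
    replace ((a - 2 * (b/c) * b + (b/c)*(b/c)*c) * c) with (a * c - b * b) in H1 by (field; lra). lra. Qed.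

Lemma gip_CS {A} (s : list A) f g : gip s f g * gip s f g <= gip s f f * gip s g g.
Proof. apply quad_disc. apply gip_self_nonneg. intros t.
  assert (0 <= gip s (fun x => f x - t * g x) (fun x => f x - t * g x)) by apply gip_self_nonneg.
  unfold gip in *. replace (lsum s (fun x => f x * f x) - 2 * t * lsum s (fun x => f x * g x) + t * t * lsum s (fun x => g x * g x))
  with (lsum s (fun x => (f x - t * g x) * (f x - t * g x))); auto.
  rewrite <- !lsum_scal, <- lsum_minus, <- lsum_plus. apply lsum_ext; intros; ring. Qed.

Lemma sqrt_CS a b c : 0 <= a -> 0 <= c -> b * b <= a * c -> Rabs b <= sqrt a * sqrt c.
Proof. intros Ha Hc H. rewrite <- sqrt_mult by auto. rewrite <- sqrt_Rsqr_abs. apply sqrt_le_1.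
  apply Rle_0_sqr. apply Rmult_le_pos; auto. unfold Rsqr; auto. Qed.

Lemma frob_nonneg d n A : 0 <= frob d n A.
Proof. apply sqrt_pos. Qed.
Lemma ip_self_nonneg d n A : 0 <= frob_ip d n A A.
Proof. apply (gip_self_nonneg (idx d n)). Qed.
Lemma frob_sq d n A : frob d n A * frob d n A = frob_ip d n A A.
Proof. apply sqrt_sqrt, ip_self_nonneg. Qed.
Lemma ip_sym d n A B : frob_ip d n A B = frob_ip d n B A.
Proof. apply (gip_sym (idx d n)). Qed.
Lemma ip_CS d n A B : Rabs (frob_ip d n A B) <= frob d n A * frob d n B.
Proof. apply sqrt_CS; try apply ip_self_nonneg. apply (gip_CS (idx d n)). Qed.
Lemma ip_le d n A B : frob_ip d n A B <= frob d n A * frob d n B.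
Proof. pose proof (ip_CS d n A B). pose proof (Rle_abs (frob_ip d n A B)). lra. Qed.
Lemma ip_add_l d n A B C : frob_ip d n (tadd A B) C = frob_ip d n A C + frob_ip d n B C.
Proof. unfold frob_ip, tadd. rewrite <- lsum_plus. apply lsum_ext; intros; ring. Qed.
Lemma ip_sub_l d n A B C : frob_ip d n (tsub A B) C = frob_ip d n A C - frob_ip d n B C.
Proof. unfold frob_ip, tsub. rewrite <- lsum_minus. apply lsum_ext; intros; ring. Qed.
Lemma ip_scale_l d n c A C : frob_ip d n (tscale c A) C = c * frob_ip d n A C.
Proof. unfold frob_ip, tscale. rewrite <- lsum_scal. apply lsum_ext; intros; ring. Qed.
Lemma ip_add_r d n A B C : frob_ip d n C (tadd A B) = frob_ip d n C A + frob_ip d n C B.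
Proof. rewrite !(ip_sym d n C). apply ip_add_l. Qed.
Lemma ip_sub_r d n A B C : frob_ip d n C (tsub A B) = frob_ip d n C A - frob_ip d n C B.
Proof. rewrite !(ip_sym d n C). apply ip_sub_l. Qed.
Lemma ip_scale_r d n c A C : frob_ip d n C (tscale c A) = c * frob_ip d n C A.
Proof. rewrite !(ip_sym d n C). apply ip_scale_l. Qed.
Lemma ip_ext d n A A' B B' : teq d n A A' -> teq d n B B' -> frob_ip d n A B = frob_ip d n A' B'.
Proof. intros H1 H2. apply lsum_ext. intros l Hl. now rewrite H1, H2. Qed.
Lemma frob_ext d n A A' : teq d n A A' -> frob d n A = frob d n A'.
Proof. intros H. unfold frob. f_equal. now apply ip_ext. Qed.
Lemma frob_eq_sqrt d n A : frob d n A = sqrt (frob_ip d n A A).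
Proof. reflexivity. Qed.

Lemma sqrt_le_from_sq x y : 0 <= y -> 0 <= x -> x <= y * y -> sqrt x <= y.
Proof. intros Hy Hx H. rewrite <- (sqrt_square y) by auto. apply sqrt_le_1; auto. nra. Qed.

Lemma frob_sq_le d n A y : 0 <= y -> frob_ip d n A A <= y * y -> frob d n A <= y.
Proof. intros. apply sqrt_le_from_sq; auto. apply ip_self_nonneg. Qed.

Lemma frob_triangle d n A B : frob d n (tadd A B) <= frob d n A + frob d n B.
Proof. apply frob_sq_le. pose proof (frob_nonneg d n A); pose proof (frob_nonneg d n B); lra.
  rewrite ip_add_l, !ip_add_r. pose proof (ip_le d n A B). rewrite (ip_sym d n B A).
  rewrite <- (frob_sq d n A), <- (frob_sq d n B). nra. Qed.

Lemma frob_scale d n c A : frob d n (tscale c A) = Rabs c * frob d n A.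
Proof. unfold frob. rewrite ip_scale_l, ip_scale_r, <- Rmult_assoc. rewrite sqrt_mult_alt.
  f_equal. rewrite <- sqrt_Rsqr_abs. reflexivity. nra. Qed.

Lemma frob_sub_sym d n A B : frob d n (tsub A B) = frob d n (tsub B A).
Proof. replace (tsub B A) with (tscale (-1) (tsub A B)). rewrite frob_scale. replace (Rabs (-1)) with 1; [ring|]. rewrite Rabs_left; lra.
  unfold tscale, tsub. apply FunctionalExtensionality.functional_extensionality; intros; ring. Qed.

Lemma frob_zero_teq d n A : frob d n A = 0 -> teq d n A tzero.
Proof. intros H l Hl. unfold tzero. assert (frob_ip d n A A = 0) by (rewrite <- frob_sq, H; ring).
  pose proof (lsum_zero_inv (idx d n) (fun l => A l * A l)) as Z. unfold frob_ip in H0.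
  assert (A l * A l = 0) by (apply Z; auto; intros; nra). nra. Qed.

Lemma frob_pos d n A : ~ teq d n A tzero -> 0 < frob d n A.
Proof. intros H. pose proof (frob_nonneg d n A). destruct (Req_dec (frob d n A) 0); [|lra].
  exfalso; apply H; now apply frob_zero_teq. Qed.

Lemma frob_zero d n : frob d n tzero = 0.
Proof. unfold frob, frob_ip, tzero. rewrite (lsum_ext _ _ (fun _ => 0)). rewrite lsum_zero. apply sqrt_0. intros; ring. Qed.

Definition vip (n : nat) (x y : nat -> R) := gip (seq 0 n) x y.
Definition vnorm (n : nat) (x : nat -> R) := sqrt (vip n x x).

Fixpoint prodR (d : nat) (f : nat -> R) : R :=
  match d with O => 1 | S d' => f O * prodR d' (fun k => f (S k)) end.

Lemma prodR_ext d f g : (forall k, (k < d)%nat -> f k = g k) -> prodR d f = prodR d g.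
Proof. revert f g; induction d; intros f g H; simpl; auto. rewrite H by lia. f_equal. apply IHd; intros; apply H; lia. Qed.
Lemma prodR_mult d f g : prodR d (fun k => f k * g k) = prodR d f * prodR d g.
Proof. revert f g; induction d; intros; simpl; [ring|]. rewrite IHd; ring. Qed.
Lemma prodR_one d f : (forall k, (k < d)%nat -> f k = 1) -> prodR d f = 1.
Proof. intros H. rewrite (prodR_ext d f (fun _ => 1)) by auto. clear H. induction d; simpl; auto. rewrite IHd; ring. Qed.
Lemma prodR_nonneg d f : (forall k, (k < d)%nat -> 0 <= f k) -> 0 <= prodR d f.
Proof. revert f; induction d; intros f H; simpl; [lra|]. apply Rmult_le_pos. apply H; lia. apply IHd; intros; apply H; lia. Qed.
Lemma prodR_zero d f k : (k < d)%nat -> f k = 0 -> prodR d f = 0.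
Proof. revert f k; induction d; intros f k Hk H; [lia|]. simpl. destruct k. rewrite H; ring.
  rewrite (IHd _ k); auto; [ring|lia]. Qed.

Definition Tm (d n : nat) (A : tensor) (xs : nat -> nat -> R) := frob_ip d n A (outer xs).

Lemma ip_outer_rec d n A xs j :
  frob_ip (S d) n A (outer_from xs j) =
  lsum (seq 0 n) (fun i => xs j i * frob_ip d n (fun l => A (i :: l)) (outer_from xs (S j))).
Proof. unfold frob_ip. rewrite idx_S. apply lsum_ext. intros i _. rewrite <- lsum_scal. apply lsum_ext. intros l _. simpl. ring. Qed.

Lemma ip_outer d n xs ys j :
  frob_ip d n (outer_from xs j) (outer_from ys j) = prodR d (fun k => vip n (xs (j + k)%nat) (ys (j + k)%nat)).
Proof. revert j; induction d; intros j. unfold frob_ip; simpl. unfold lsum; simpl; ring.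
  rewrite ip_outer_rec. simpl. unfold vip, gip.
  transitivity (lsum (seq 0 n) (fun i => xs j i * ys j i * frob_ip d n (outer_from xs (S j)) (outer_from ys (S j)))).
  apply lsum_ext. intros i _. unfold frob_ip. rewrite <- !lsum_scal. apply lsum_ext; intros; simpl; ring.
  rewrite IHd. rewrite (lsum_ext _ _ (fun i => prodR d (fun k => lsum (seq 0 n) (fun i0 : nat => xs (S j + k)%nat i0 * ys (S j + k)%nat i0)) * (xs j i * ys j i))).
  rewrite lsum_scal. rewrite Nat.add_0_r. rewrite Rmult_comm. f_equal. apply prodR_ext. intros k _. rewrite <- plus_n_Sm. reflexivity.
  intros; unfold vip, gip; ring. Qed.

Lemma vnorm_nonneg n x : 0 <= vnorm n x.
Proof. apply sqrt_pos. Qed.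
Lemma vip_self_nonneg n x : 0 <= vip n x x.
Proof. apply gip_self_nonneg. Qed.
Lemma vnorm_sq n x : vnorm n x * vnorm n x = vip n x x.
Proof. apply sqrt_sqrt, vip_self_nonneg. Qed.

Lemma frob_outer d n xs : frob d n (outer xs) = prodR d (fun k => vnorm n (xs k)).
Proof. unfold frob, outer. rewrite ip_outer. simpl. revert xs. induction d; intros xs; simpl. apply sqrt_1.
  rewrite sqrt_mult_alt by apply vip_self_nonneg. f_equal. apply (IHd (fun k => xs (S k))). Qed.

Lemma frob_outer_unit d n xs : (forall j, (j < d)%nat -> unit_vec n (xs j)) -> frob d n (outer xs) = 1.
Proof. intros H. rewrite frob_outer. apply prodR_one. intros k Hk. unfold vnorm. specialize (H k Hk). unfold unit_vec in H.
  unfold vip, gip. rewrite H. apply sqrt_1. Qed.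

Lemma unit_vnorm n x : unit_vec n x <-> vnorm n x = 1.
Proof. unfold unit_vec, vnorm, vip, gip. split; intros H. rewrite H; apply sqrt_1.
  rewrite <- (sqrt_sqrt (lsum _ _)). rewrite H; ring. apply (gip_self_nonneg (seq 0 n)). Qed.

Definition upd (xs : nat -> nat -> R) (k : nat) (v : nat -> R) : nat -> nat -> R :=
  fun j => if Nat.eqb j k then v else xs j.

Lemma outer_from_ext xs ys j l : (forall m, (j <= m)%nat -> xs m = ys m) -> outer_from xs j l = outer_from ys j l.
Proof. revert j; induction l; intros j H; simpl; auto. rewrite H by lia. f_equal. apply IHl. intros; apply H; lia. Qed.

Lemma outer_from_upd_irrel xs k w j l : (k < j)%nat -> outer_from (upd xs k w) j l = outer_from xs j l.
Proof. intros H. apply outer_from_ext. intros m Hm. unfold upd. destruct (Nat.eqb_spec m k); auto; lia. Qed.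

Lemma outer_from_lin xs k a b u v j l : (j <= k)%nat -> (k < j + length l)%nat ->
  outer_from (upd xs k (fun i => a * u i + b * v i)) j l =
  a * outer_from (upd xs k u) j l + b * outer_from (upd xs k v) j l.
Proof. revert j; induction l as [|i l IH]; intros j H1 H2; simpl in *. lia.
  destruct (Nat.eq_dec j k). subst. unfold upd at 1 3 5. rewrite Nat.eqb_refl.
  rewrite !outer_from_upd_irrel by lia. ring.
  unfold upd at 1 3 5. destruct (Nat.eqb_spec j k); [lia|]. rewrite IH by lia. ring. Qed.

Lemma Tm_lin d n A xs k a b u v : (k < d)%nat ->
  Tm d n A (upd xs k (fun i => a * u i + b * v i)) = a * Tm d n A (upd xs k u) + b * Tm d n A (upd xs k v).
Proof. intros Hk. unfold Tm, frob_ip, outer. rewrite <- !lsum_scal, <- lsum_plus. apply lsum_ext.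
  intros l Hl. apply In_idx in Hl as [Hlen _]. rewrite outer_from_lin by lia. ring. Qed.

Lemma upd_same xs k : upd xs k (xs k) = xs.
Proof. extensionality j. unfold upd. destruct (Nat.eqb_spec j k); subst; auto. Qed.
Lemma upd_upd xs k v w : upd (upd xs k v) k w = upd xs k w.
Proof. extensionality j. unfold upd. destruct (Nat.eqb_spec j k); auto. Qed.
Lemma upd_comm xs k m v w : k <> m -> upd (upd xs k v) m w = upd (upd xs m w) k v.
Proof. intros H. extensionality j. unfold upd. destruct (Nat.eqb_spec j k), (Nat.eqb_spec j m); subst; auto; lia. Qed.
Lemma upd_eq xs k v : upd xs k v k = v.
Proof. unfold upd. now rewrite Nat.eqb_refl. Qed.
Lemma upd_neq xs k v j : j <> k -> upd xs k v j = xs j.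
Proof. unfold upd. intros H. destruct (Nat.eqb_spec j k); auto; lia. Qed.

Lemma Tm_add d n A B xs : Tm d n (tadd A B) xs = Tm d n A xs + Tm d n B xs.
Proof. apply ip_add_l. Qed.
Lemma Tm_scale d n c A xs : Tm d n (tscale c A) xs = c * Tm d n A xs.
Proof. apply ip_scale_l. Qed.

Fixpoint swapl (k : nat) (l : list nat) : list nat :=
  match k, l with
  | O, a :: b :: t => b :: a :: t
  | S k', a :: t => a :: swapl k' t
  | _, _ => l
  end.

Definition sw (m : nat) (xs : nat -> nat -> R) : nat -> nat -> R :=
  fun p => if Nat.eqb p m then xs (S m) else if Nat.eqb p (S m) then xs m else xs p.

Lemma swapl_perm k l : Permutation l (swapl k l).
Proof. revert l; induction k; intros l; destruct l as [|a [|b t]]; simpl; auto; try constructor; auto. Qed.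
Lemma swapl_inv k l : swapl k (swapl k l) = l.
Proof. revert l; induction k; intros l; destruct l as [|a [|b t]]; simpl; auto.
  rewrite IHk; auto. f_equal. apply (IHk (b :: t)). Qed.

Lemma outer_swapl xs k j l : (S k < length l)%nat ->
  outer_from xs j (swapl k l) = outer_from (sw (j + k) xs) j l.
Proof. revert j l; induction k; intros j l H.
  - destruct l as [|a [|b t]]; simpl in H; try lia. simpl. rewrite Nat.add_0_r.
    unfold sw at 1 2. rewrite Nat.eqb_refl. destruct (Nat.eqb_spec (S j) j); [lia|]. rewrite Nat.eqb_refl.
    rewrite (outer_from_ext (sw j xs) xs). ring.
    intros m Hm. unfold sw. destruct (Nat.eqb_spec m j); [lia|]. destruct (Nat.eqb_spec m (S j)); [lia|]. auto.
  - destruct l as [|a t]; simpl in H; try lia. simpl. rewrite IHk by lia.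
    unfold sw at 2. destruct (Nat.eqb_spec j (j + S k)); [lia|]. destruct (Nat.eqb_spec j (S (j + S k))); [lia|].
    f_equal. replace (j + S k)%nat with (S j + k)%nat by lia. reflexivity. Qed.

Lemma idx_swap_perm d n k : Permutation (map (swapl k) (idx d n)) (idx d n).
Proof. apply NoDup_Permutation.
  - apply NoDup_map_NoDup_ForallPairs. intros x y _ _ H. rewrite <- (swapl_inv k x), H. apply swapl_inv.
    apply NoDup_idx.
  - apply NoDup_idx.
  - intros l. split.
    + intros Hl. apply in_map_iff in Hl as [m [<- Hm]]. apply In_idx in Hm as [H1 H2]. apply In_idx. split.
      rewrite <- H1. symmetry. apply Permutation_length, swapl_perm.
      eapply Permutation_Forall; [apply swapl_perm|]; auto.
    + intros Hl. apply in_map_iff. exists (swapl k l). split. apply swapl_inv.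
      apply In_idx in Hl as [H1 H2]. apply In_idx. split.
      rewrite <- H1. apply Permutation_length, Permutation_sym, swapl_perm.
      eapply Permutation_Forall; [apply swapl_perm|]; auto. Qed.

Lemma Tm_sw d n A xs k : is_sym d n A -> (S k < d)%nat -> Tm d n A (sw k xs) = Tm d n A xs.
Proof. intros HA Hk. unfold Tm, frob_ip, outer.
  transitivity (lsum (idx d n) (fun l => A (swapl k l) * outer_from xs 0 (swapl k l))).
  - apply lsum_ext. intros l Hl. rewrite <- (HA l (swapl k l) Hl (swapl_perm k l)).
    rewrite outer_swapl. reflexivity. apply In_idx in Hl as [-> _]. auto.
  - rewrite <- (lsum_map (swapl k) (idx d n) (fun l => A l * outer_from xs 0 l)). apply lsum_perm, idx_swap_perm. Qed.

Lemma Tm_bisym d n A xs k u v : is_sym d n A -> (S k < d)%nat ->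
  Tm d n A (upd (upd xs k u) (S k) v) = Tm d n A (upd (upd xs k v) (S k) u).
Proof. intros HA Hk. rewrite <- (Tm_sw d n A _ k HA Hk). f_equal. extensionality p. unfold sw, upd.
  destruct (Nat.eqb_spec p k); destruct (Nat.eqb_spec p (S k)); destruct (Nat.eqb_spec k k);
  destruct (Nat.eqb_spec (S k) (S k)); destruct (Nat.eqb_spec k (S k)); destruct (Nat.eqb_spec (S k) k); subst; try lia; auto. Qed.

Lemma outer_from_scale xs c j l :
  outer_from (fun m i => c m * xs m i) j l = prodR (length l) (fun k => c (j + k)%nat) * outer_from xs j l.
Proof. revert j; induction l; intros j; simpl. ring. rewrite IHl. rewrite Nat.add_0_r.
  rewrite (prodR_ext _ (fun k => c (S j + k)%nat) (fun k => c (j + S k)%nat)). ring.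
  intros; f_equal; lia. Qed.

Lemma outer_from_const_perm (x : nat -> R) j l l' : Permutation l l' ->
  outer_from (fun _ => x) j l = outer_from (fun _ => x) j l'.
Proof. intros H. revert j. induction H; intros j; simpl; auto. rewrite IHPermutation; auto. ring. congruence. Qed.

Lemma outer_const_sym d n (x : nat -> R) c : is_sym d n (tscale c (outer (fun _ => x))).
Proof. intros l l' _ H. unfold tscale, outer. now rewrite (outer_from_const_perm x 0 l l' H). Qed.

Definition unitv (d n : nat) (xs : nat -> nat -> R) := forall j, (j < d)%nat -> unit_vec n (xs j).

Definition e0 : nat -> R := fun i => if Nat.eqb i 0 then 1 else 0.

Lemma e0_unit n : (1 <= n)%nat -> unit_vec n e0.
Proof. intros H. destruct n; [lia|]. unfold unit_vec. rewrite <- cons_seq. rewrite lsum_cons.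
  unfold e0 at 1 2; simpl. rewrite (lsum_ext _ _ (fun _ => 0)). rewrite lsum_zero; ring.
  intros x Hx. apply in_seq in Hx. unfold e0. destruct (Nat.eqb_spec x 0); [lia|]. ring. Qed.

Lemma spec_values_bound d n A v : spec_values d n A v -> v <= frob d n A.
Proof. intros [xs [Hu ->]]. pose proof (ip_le d n A (outer xs)). rewrite frob_outer_unit in H; auto. lra. Qed.

Lemma spec_lub d n A : (1 <= n)%nat -> is_lub (spec_values d n A) (spec_norm d n A).
Proof. intros Hn. unfold spec_norm. apply epsilon_spec. destruct (completeness (spec_values d n A)) as [m Hm].
  exists (frob d n A). intros v Hv. now apply spec_values_bound.
  exists (Tm d n A (fun _ => e0)). exists (fun _ => e0). split; auto. intros; now apply e0_unit. now exists m. Qed.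

Lemma spec_ge d n A xs : (1 <= n)%nat -> unitv d n xs -> Tm d n A xs <= spec_norm d n A.
Proof. intros Hn H. apply (spec_lub d n A Hn). exists xs; split; auto. Qed.

Lemma spec_le d n A b : (1 <= n)%nat -> (forall xs, unitv d n xs -> Tm d n A xs <= b) -> spec_norm d n A <= b.
Proof. intros Hn H. apply (spec_lub d n A Hn). intros v [xs [Hu ->]]. now apply H. Qed.

Lemma spec_approx d n A eps : (1 <= n)%nat -> eps > 0 -> exists xs, unitv d n xs /\ spec_norm d n A - eps < Tm d n A xs.
Proof. intros Hn He. destruct (Rlt_le_dec (spec_norm d n A - eps) (spec_norm d n A - eps)) as [X|_]; [lra|].
  apply NNPP. intros Hno. assert (spec_norm d n A <= spec_norm d n A - eps); [|lra].
  apply spec_le; auto. intros xs Hu. apply Rnot_lt_le. intros Hlt. apply Hno. exists xs; auto. Qed.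

Lemma vip_neg n x : vip n (fun i => -1 * x i + 0 * x i) (fun i => -1 * x i + 0 * x i) = vip n x x.
Proof. apply lsum_ext; intros; ring. Qed.

Lemma unitv_upd d n xs k v : unitv d n xs -> unit_vec n v -> unitv d n (upd xs k v).
Proof. intros H Hv j Hj. unfold upd. destruct (Nat.eqb j k); auto. Qed.

Lemma spec_neg d n A xs : (1 <= d)%nat -> unitv d n xs -> exists ys, unitv d n ys /\ Tm d n A ys = - Tm d n A xs.
Proof. intros Hd Hu. exists (upd xs 0 (fun i => -1 * xs 0%nat i + 0 * xs 0%nat i)). split.
  apply unitv_upd; auto. unfold unit_vec. pose proof (vip_neg n (xs 0%nat)). unfold vip, gip in H. rewrite H. apply Hu; lia.
  rewrite Tm_lin by lia. rewrite upd_same. ring. Qed.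

Lemma spec_abs d n A xs : (1 <= n)%nat -> (1 <= d)%nat -> unitv d n xs -> Rabs (Tm d n A xs) <= spec_norm d n A.
Proof. intros Hn Hd Hu. destruct (spec_neg d n A xs Hd Hu) as [ys [Hy E]].
  pose proof (spec_ge d n A xs Hn Hu). pose proof (spec_ge d n A ys Hn Hy). unfold Rabs; destruct Rcase_abs; lra. Qed.

Lemma spec_nonneg d n A : (1 <= n)%nat -> (1 <= d)%nat -> 0 <= spec_norm d n A.
Proof. intros Hn Hd. assert (unitv d n (fun _ => e0)) by (intros j _; now apply e0_unit).
  pose proof (spec_abs d n A _ Hn Hd H). pose proof (Rabs_pos (Tm d n A (fun _ => e0))). lra. Qed.

Lemma spec_le_frob d n A : (1 <= n)%nat -> spec_norm d n A <= frob d n A.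
Proof. intros Hn. apply spec_le; auto. intros xs Hu. apply spec_values_bound. exists xs; split; auto. Qed.

Lemma Tm_bound_unit d n A xs : unitv d n xs -> Tm d n A xs <= frob d n A.
Proof. intros Hu. apply spec_values_bound. exists xs; split; auto. Qed.

Lemma spec_lip d n A B : (1 <= n)%nat -> spec_norm d n (tadd A B) <= spec_norm d n A + frob d n B.
Proof. intros Hn. apply spec_le; auto. intros xs Hu. rewrite Tm_add.
  pose proof (spec_ge d n A xs Hn Hu). pose proof (Tm_bound_unit d n B xs Hu). lra. Qed.

Lemma lub_unique E a b : is_lub E a -> is_lub E b -> a = b.
Proof. intros [H1 H2] [H3 H4]. apply Rle_antisym; auto. Qed.

Lemma spec_ext d n A B : (1 <= n)%nat -> teq d n A B -> spec_norm d n A = spec_norm d n B.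
Proof. intros Hn H. apply (lub_unique (spec_values d n B)); [|apply spec_lub; auto].
  destruct (spec_lub d n A Hn) as [H1 H2]. split.
  - intros v [xs [Hu E]]. apply H1. exists xs; split; auto. rewrite E. apply ip_ext; auto. intros l Hl; symmetry; auto. intros l _; auto.
  - intros b Hb. apply H2. intros v [xs [Hu E]]. apply Hb. exists xs; split; auto. rewrite E. apply ip_ext; auto. intros l _; auto. Qed.

Lemma spec_lip_abs d n A B : (1 <= n)%nat -> Rabs (spec_norm d n A - spec_norm d n B) <= frob d n (tsub A B).
Proof. intros Hn. assert (E1 : teq d n A (tadd B (tsub A B))) by (intros l _; unfold tadd, tsub; ring).
  assert (E2 : teq d n B (tadd A (tsub B A))) by (intros l _; unfold tadd, tsub; ring).
  pose proof (spec_lip d n B (tsub A B) Hn). pose proof (spec_lip d n A (tsub B A) Hn).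
  rewrite <- (spec_ext _ _ _ _ Hn E1) in H. rewrite <- (spec_ext _ _ _ _ Hn E2) in H0. rewrite frob_sub_sym in H0.
  unfold Rabs; destruct Rcase_abs; lra. Qed.

Lemma vnorm_zero_frob d n xs k v : (k < d)%nat -> vnorm n v = 0 -> frob d n (outer (upd xs k v)) = 0.
Proof. intros Hk H. rewrite frob_outer. apply (prodR_zero d _ k Hk). now rewrite upd_eq. Qed.

Lemma Tm_slot_bound d n A xs k v : (1 <= n)%nat -> (k < d)%nat -> unitv d n xs ->
  Tm d n A (upd xs k v) <= spec_norm d n A * vnorm n v.
Proof. intros Hn Hk Hu. assert (Hd : (1 <= d)%nat) by lia. pose proof (spec_nonneg d n A Hn Hd).
  pose proof (vnorm_nonneg n v). destruct (Req_dec (vnorm n v) 0) as [Z|Z].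
  - pose proof (ip_le d n A (outer (upd xs k v))). unfold Tm. rewrite vnorm_zero_frob in H1 by auto. rewrite Z. lra.
  - set (a := vnorm n v). set (w := fun i => v i / a).
    assert (Ev : v = fun i => a * w i + 0 * w i) by (extensionality i; unfold w; field; auto).
    rewrite Ev, Tm_lin by auto. assert (unit_vec n w).
    { unfold unit_vec. rewrite (lsum_ext _ _ (fun i => /(a*a) * (v i * v i))). rewrite lsum_scal.
      unfold a. change (lsum (seq 0 n) (fun x => v x * v x)) with (vip n v v). rewrite <- vnorm_sq. field. auto.
      intros; unfold w; field; auto. }
    pose proof (spec_ge d n A (upd xs k w) Hn (unitv_upd d n xs k w Hu H1)). assert (0 <= a) by (unfold a; lra). clearbody a w. nra. Qed.

Lemma Tm_slot_abs d n A xs k v : (1 <= n)%nat -> (k < d)%nat -> unitv d n xs ->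
  Rabs (Tm d n A (upd xs k v)) <= spec_norm d n A * vnorm n v.
Proof. intros Hn Hk Hu. pose proof (Tm_slot_bound d n A xs k v Hn Hk Hu).
  pose proof (Tm_slot_bound d n A xs k (fun i => -1 * v i + 0 * v i) Hn Hk Hu).
  rewrite Tm_lin in H0 by auto. unfold vnorm in H0. rewrite vip_neg in H0. fold (vnorm n v) in H0.
  unfold Rabs; destruct Rcase_abs; lra. Qed.

Definition vlin (a : R) (x : nat -> R) (b : R) (y : nat -> R) : nat -> R := fun i => a * x i + b * y i.

Lemma vip_sym n x y : vip n x y = vip n y x.
Proof. apply gip_sym. Qed.
Lemma vip_lin_l n a x b y z : vip n (vlin a x b y) z = a * vip n x z + b * vip n y z.
Proof. unfold vip, gip, vlin. rewrite <- !lsum_scal, <- lsum_plus. apply lsum_ext; intros; ring. Qed.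
Lemma vip_lin_r n a x b y z : vip n z (vlin a x b y) = a * vip n z x + b * vip n z y.
Proof. rewrite !(vip_sym n z). apply vip_lin_l. Qed.
Lemma vip_CS n x y : Rabs (vip n x y) <= vnorm n x * vnorm n y.
Proof. apply sqrt_CS; try apply vip_self_nonneg. apply gip_CS. Qed.
Lemma vnorm_sq_le n x y : 0 <= y -> vip n x x <= y * y -> vnorm n x <= y.
Proof. intros. apply sqrt_le_from_sq; auto. apply vip_self_nonneg. Qed.
Lemma vnorm_triangle n a x b y : vnorm n (vlin a x b y) <= Rabs a * vnorm n x + Rabs b * vnorm n y.
Proof. apply vnorm_sq_le. pose proof (vnorm_nonneg n x); pose proof (vnorm_nonneg n y); pose proof (Rabs_pos a); pose proof (Rabs_pos b); nra.
  rewrite vip_lin_l, !vip_lin_r. rewrite (vip_sym n y x). pose proof (vip_CS n x y).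
  rewrite <- (vnorm_sq n x), <- (vnorm_sq n y).
  assert (a * b * vip n x y <= Rabs a * Rabs b * (vnorm n x * vnorm n y)).
  { rewrite <- Rabs_mult. pose proof (Rle_abs (a * b * vip n x y)). rewrite !Rabs_mult in H0.
    rewrite Rabs_mult. pose proof (Rabs_pos (a*b)). rewrite Rabs_mult in H1. nra. }
  assert (a * a = Rabs a * Rabs a) by (rewrite <- Rabs_mult; rewrite Rabs_pos_eq; nra).
  assert (b * b = Rabs b * Rabs b) by (rewrite <- Rabs_mult; rewrite Rabs_pos_eq; nra). nra. Qed.

Lemma unit_vip n x : unit_vec n x -> vip n x x = 1.
Proof. auto. Qed.
Lemma unit_vip_bound n x y : unit_vec n x -> unit_vec n y -> Rabs (vip n x y) <= 1.
Proof. intros Hx Hy. pose proof (vip_CS n x y). apply unit_vnorm in Hx, Hy. rewrite Hx, Hy in H. lra. Qed.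
Lemma vnorm_ext n x y : (forall i, (i < n)%nat -> x i = y i) -> vnorm n x = vnorm n y.
Proof. intros H. unfold vnorm, vip, gip. f_equal. apply lsum_ext. intros i Hi. apply in_seq in Hi. rewrite H by lia. reflexivity. Qed.

Lemma rsum_two d k g : (S k < d)%nat -> (forall a, a <> k -> a <> S k -> g a = 0) -> rsum d g = g k + g (S k).
Proof. intros Hk H. unfold rsum. replace d with (k + (2 + (d - k - 2)))%nat by lia.
  rewrite seq_app, lsum_app, seq_app, lsum_app. simpl.
  rewrite (lsum_ext (seq 0 k) _ (fun _ => 0)), lsum_zero. rewrite (lsum_ext (seq (k+2) _) _ (fun _ => 0)), lsum_zero.
  unfold lsum; simpl. replace (k + 1)%nat with (S k) by lia. ring.
  intros x Hx; apply in_seq in Hx; apply H; lia. intros x Hx; apply in_seq in Hx; apply H; lia. Qed.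

Lemma rsum_minus r f g : rsum r (fun a => f a - g a) = rsum r f - rsum r g.
Proof. apply lsum_minus. Qed.
Lemma rsum_plus r f g : rsum r (fun a => f a + g a) = rsum r f + rsum r g.
Proof. apply lsum_plus. Qed.
Lemma rsum_scal r c f : rsum r (fun a => c * f a) = c * rsum r f.
Proof. apply lsum_scal. Qed.

Lemma rsum_change2 d k f f' : (S k < d)%nat -> (forall a, a <> k -> a <> S k -> f' a = f a) ->
  rsum d f' = rsum d f - f k - f (S k) + f' k + f' (S k).
Proof. intros Hk H. assert (rsum d (fun a => f' a - f a) = (f' k - f k) + (f' (S k) - f (S k))).
  apply (rsum_two d k (fun a => f' a - f a)); auto. intros a H1 H2. rewrite H; auto; ring.
  rewrite rsum_minus in H0. lra. Qed.

Definition Mt (d : nat) (xs : nat -> nat -> R) : tensor := fun l => rsum d (fun a => outer_from (fun _ => xs a) 0 l).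
Definition Pot (d n : nat) (xs : nat -> nat -> R) : R := frob_ip 2 n (Mt d xs) (Mt d xs).

Lemma Pot_nonneg d n xs : 0 <= Pot d n xs.
Proof. apply ip_self_nonneg. Qed.

Lemma frob_Mt d n xs : unitv d n xs -> frob 2 n (Mt d xs) <= INR d.
Proof. induction d; intros Hu.
  - simpl. rewrite (frob_ext 2 n _ tzero). rewrite frob_zero; lra. intros l _. reflexivity.
  - rewrite (frob_ext 2 n _ (tadd (Mt d xs) (outer (fun _ => xs d)))).
    pose proof (frob_triangle 2 n (Mt d xs) (outer (fun _ => xs d))).
    rewrite frob_outer_unit in H. rewrite S_INR. assert (frob 2 n (Mt d xs) <= INR d). apply IHd. intros j Hj; apply Hu; lia. lra.
    intros j _; apply Hu; lia.
    intros l _. unfold Mt, tadd, outer. rewrite rsum_S. reflexivity. Qed.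

Lemma Pot_bound d n xs : unitv d n xs -> Pot d n xs <= INR d * INR d.
Proof. intros Hu. unfold Pot. rewrite <- frob_sq. pose proof (frob_Mt d n xs Hu). pose proof (frob_nonneg 2 n (Mt d xs)). nra. Qed.

Definition Bf d n q xs k (u v : nat -> R) := Tm d n q (upd (upd xs k u) (S k) v).

Lemma Bf_lin_l d n q xs k a u b u' v : (S k < d)%nat ->
  Bf d n q xs k (vlin a u b u') v = a * Bf d n q xs k u v + b * Bf d n q xs k u' v.
Proof. intros Hk. unfold Bf. rewrite !(upd_comm _ k (S k)) by lia. apply Tm_lin. lia. Qed.
Lemma Bf_lin_r d n q xs k a u b u' v : (S k < d)%nat ->
  Bf d n q xs k v (vlin a u b u') = a * Bf d n q xs k v u + b * Bf d n q xs k v u'.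
Proof. intros Hk. unfold Bf. apply Tm_lin. lia. Qed.
Lemma Bf_sym d n q xs k u v : is_sym d n q -> (S k < d)%nat -> Bf d n q xs k u v = Bf d n q xs k v u.
Proof. intros. apply Tm_bisym; auto. Qed.
Lemma Bf_xy d n q xs k : Bf d n q xs k (xs k) (xs (S k)) = Tm d n q xs.
Proof. unfold Bf. rewrite upd_same. rewrite upd_same. reflexivity. Qed.

Lemma idx2 n l : In l (idx 2 n) -> exists i j, l = [i; j].
Proof. intros H. apply In_idx in H as [H _]. destruct l as [|i [|j [|]]]; simpl in H; try lia. eauto. Qed.

Definition Phi d n q kap xs := Tm d n q xs + kap * Pot d n xs.

Lemma polarize d n q kap xs k : is_sym d n q -> (S k < d)%nat -> 0 <= kap -> unitv d n xs ->
  Rabs (vip n (xs k) (xs (S k))) < 1 ->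
  exists ys, unitv d n ys /\
    Phi d n q kap ys >= Phi d n q kap xs + 2 * kap * (1 - vip n (xs k) (xs (S k)) * vip n (xs k) (xs (S k))).
Proof. intros Hq Hk Hkap Hu Hc.
  set (x := xs k). set (y := xs (S k)). set (c := vip n x y).
  assert (Hx : vip n x x = 1) by (apply Hu; lia). assert (Hy : vip n y y = 1) by (apply Hu; lia).
  assert (Hc1 : -1 < c < 1) by (unfold c, x, y; apply Rabs_def2 in Hc; lra).
  set (a := / sqrt (2 + 2 * c)). set (b := / sqrt (2 - 2 * c)).
  assert (Ha : a * a = / (2 + 2 * c)). { unfold a. rewrite <- Rinv_mult, sqrt_sqrt; lra. }
  assert (Hb : b * b = / (2 - 2 * c)). { unfold b. rewrite <- Rinv_mult, sqrt_sqrt; lra. }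
  set (wp := vlin a x a y). set (wm := vlin b x (-b) y). set (nwm := vlin (-b) x b y).
  assert (Uwp : vip n wp wp = 1). { unfold wp. rewrite vip_lin_l, !vip_lin_r. fold c. rewrite (vip_sym n y x). fold c.
    rewrite Hx, Hy. replace (a * (a * 1 + a * c) + a * (a * c + a * 1)) with ((a * a) * (2 + 2 * c)) by ring. rewrite Ha. field. lra. }
  assert (Uwm : vip n wm wm = 1). { unfold wm. rewrite vip_lin_l, !vip_lin_r. fold c. rewrite (vip_sym n y x). fold c.
    rewrite Hx, Hy. replace (b * (b * 1 + - b * c) + - b * (b * c + - b * 1)) with ((b * b) * (2 - 2 * c)) by ring. rewrite Hb. field. lra. }
  assert (Unwm : vip n nwm nwm = 1). { unfold nwm. rewrite vip_lin_l, !vip_lin_r. fold c. rewrite (vip_sym n y x). fold c.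
    rewrite Hx, Hy. replace (- b * (- b * 1 + b * c) + b * (- b * c + b * 1)) with ((b * b) * (2 - 2 * c)) by ring. rewrite Hb. field. lra. }
  set (ysp := upd (upd xs k wp) (S k) wp). set (ysm := upd (upd xs k wm) (S k) nwm).
  assert (Up : unitv d n ysp) by (apply unitv_upd; [apply unitv_upd|]; auto).
  assert (Um : unitv d n ysm) by (apply unitv_upd; [apply unitv_upd|]; auto).
  set (Bxx := Bf d n q xs k x x). set (Byy := Bf d n q xs k y y). set (Bxy := Bf d n q xs k x y).
  assert (Byx : Bf d n q xs k y x = Bxy) by (apply Bf_sym; auto).
  assert (Tp : Tm d n q ysp = a * a * (Bxx + 2 * Bxy + Byy)).
  { change (Tm d n q ysp) with (Bf d n q xs k wp wp). unfold wp. rewrite Bf_lin_l, !Bf_lin_r by auto.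
    fold Bxx Byy Bxy. rewrite Byx. ring. }
  assert (Tmm : Tm d n q ysm = - (b * b) * (Bxx - 2 * Bxy + Byy)).
  { change (Tm d n q ysm) with (Bf d n q xs k wm nwm). unfold wm, nwm. rewrite Bf_lin_l, !Bf_lin_r by auto.
    fold Bxx Byy Bxy. rewrite Byx. ring. }
  assert (T0 : Tm d n q xs = Bxy) by (unfold Bxy, x, y; now rewrite Bf_xy).
  set (X := outer (fun _ => x)). set (Y := outer (fun _ => y)).
  set (Wp := outer (fun _ => wp)). set (Wm := outer (fun _ => wm)).
  set (Z := tsub (tsub (Mt d xs) X) Y).
  assert (EP : teq 2 n (Mt d ysp) (tadd Z (tscale 2 Wp))).
  { intros l Hl. unfold Mt, Z, tadd, tsub, tscale, X, Y, Wp, outer.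
    rewrite (rsum_change2 d k (fun a => outer_from (fun _ => xs a) 0 l) (fun a => outer_from (fun _ => ysp a) 0 l)); auto.
    unfold ysp. rewrite upd_neq by lia. rewrite !upd_eq. fold x y. unfold Mt. ring.
    intros a0 H1 H2. unfold ysp. rewrite !upd_neq; auto. }
  assert (EM : teq 2 n (Mt d ysm) (tadd Z (tscale 2 Wm))).
  { intros l Hl. unfold Mt, Z, tadd, tsub, tscale, X, Y, Wm, outer.
    rewrite (rsum_change2 d k (fun a => outer_from (fun _ => xs a) 0 l) (fun a => outer_from (fun _ => ysm a) 0 l)); auto.
    unfold ysm. rewrite upd_neq by lia. rewrite !upd_eq. fold x y.
    destruct (idx2 n l Hl) as [i [j ->]]. unfold Mt. simpl. unfold nwm, wm, vlin. ring.
    intros a0 H1 H2. unfold ysm. rewrite !upd_neq; auto. }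
  assert (Hmp : (1 + c) / 2 * (a * a) = / 4) by (rewrite Ha; field; lra).
  assert (Hmm : (1 - c) / 2 * (b * b) = / 4) by (rewrite Hb; field; lra).
  assert (EW : teq 2 n (tadd (tscale ((1+c)/2) Wp) (tscale ((1-c)/2) Wm)) (tscale (1/2) (tadd X Y))).
  { intros l Hl. destruct (idx2 n l Hl) as [i [j ->]]. unfold tadd, tscale, Wp, Wm, X, Y, outer. simpl. unfold wp, wm, vlin.
    transitivity (((1 + c) / 2 * (a * a)) * ((x i + y i) * (x j + y j)) + ((1 - c) / 2 * (b * b)) * ((x i - y i) * (x j - y j))).
    ring. rewrite Hmp, Hmm. field. }
  assert (XX : frob_ip 2 n X X = 1) by (unfold X, outer; rewrite ip_outer; simpl; rewrite Hx; ring).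
  assert (YY : frob_ip 2 n Y Y = 1) by (unfold Y, outer; rewrite ip_outer; simpl; rewrite Hy; ring).
  assert (XY : frob_ip 2 n X Y = c * c) by (unfold X, Y, outer; rewrite ip_outer; simpl; fold c; ring).
  assert (PP : frob_ip 2 n Wp Wp = 1) by (unfold Wp, outer; rewrite ip_outer; simpl; rewrite Uwp; ring).
  assert (MM : frob_ip 2 n Wm Wm = 1) by (unfold Wm, outer; rewrite ip_outer; simpl; rewrite Uwm; ring).
  assert (Pp : Pot d n ysp = frob_ip 2 n Z Z + 4 * frob_ip 2 n Z Wp + 4).
  { unfold Pot. rewrite (ip_ext 2 n _ _ _ _ EP EP). rewrite ip_add_l, !ip_add_r, !ip_scale_l, !ip_scale_r, PP.
    rewrite (ip_sym 2 n Wp Z). ring. }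
  assert (Pm : Pot d n ysm = frob_ip 2 n Z Z + 4 * frob_ip 2 n Z Wm + 4).
  { unfold Pot. rewrite (ip_ext 2 n _ _ _ _ EM EM). rewrite ip_add_l, !ip_add_r, !ip_scale_l, !ip_scale_r, MM.
    rewrite (ip_sym 2 n Wm Z). ring. }
  assert (E0 : teq 2 n (Mt d xs) (tadd (tadd Z X) Y)) by (intros l _; unfold Z, tadd, tsub; ring).
  assert (P0 : Pot d n xs = frob_ip 2 n Z Z + 2 * frob_ip 2 n Z X + 2 * frob_ip 2 n Z Y + 2 + 2 * (c * c)).
  { unfold Pot. rewrite (ip_ext 2 n _ _ _ _ E0 E0). rewrite !ip_add_l, !ip_add_r, XX, YY, XY.
    rewrite (ip_sym 2 n X Z), (ip_sym 2 n Y Z), (ip_sym 2 n Y X), XY. ring. }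
  assert (RW : (1 + c) / 2 * frob_ip 2 n Z Wp + (1 - c) / 2 * frob_ip 2 n Z Wm = / 2 * (frob_ip 2 n Z X + frob_ip 2 n Z Y)).
  { pose proof (ip_ext 2 n Z Z _ _ (fun l _ => eq_refl) EW) as H. rewrite ip_add_r, !ip_scale_r, ip_add_r in H. lra. }
  set (G := 2 * kap * (1 - c * c)).
  assert (WE : (1 + c) / 2 * Phi d n q kap ysp + (1 - c) / 2 * Phi d n q kap ysm = Phi d n q kap xs + G).
  { unfold Phi, G. rewrite Tp, Tmm, T0, Pp, Pm, P0.
    transitivity (((1 + c) / 2 * (a * a)) * (Bxx + 2 * Bxy + Byy) - ((1 - c) / 2 * (b * b)) * (Bxx - 2 * Bxy + Byy)
       + kap * (frob_ip 2 n Z Z + 4 * ((1 + c) / 2 * frob_ip 2 n Z Wp + (1 - c) / 2 * frob_ip 2 n Z Wm) + 4)).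
    field. rewrite Hmp, Hmm, RW. field. }
  fold x y c. destruct (Rle_dec (Phi d n q kap xs + G) (Phi d n q kap ysp)) as [L|L].
  - exists ysp; split; auto. fold G. lra.
  - exists ysm; split; auto. fold G. apply Rnot_le_lt in L.
    assert ((1 + c) / 2 * Phi d n q kap ysp < (1 + c) / 2 * (Phi d n q kap xs + G)) by (apply Rmult_lt_compat_l; lra).
    assert (0 < (1 - c) / 2) by lra.
    assert ((1 - c) / 2 * (Phi d n q kap xs + G) <= (1 - c) / 2 * Phi d n q kap ysm) by lra.
    apply Rle_ge. apply (Rmult_le_reg_l ((1 - c) / 2)); auto. Qed.

Lemma outer_from_ext_lt xs ys j l : (forall m, (j <= m)%nat -> (m < j + length l)%nat -> xs m = ys m) ->
  outer_from xs j l = outer_from ys j l.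
Proof. revert j; induction l; intros j H; simpl; auto. simpl in H. rewrite H by lia. f_equal. apply IHl. intros; apply H; lia. Qed.

Lemma vnorm_zero_fun n : vnorm n (fun _ => 0) = 0.
Proof. unfold vnorm, vip, gip. rewrite (lsum_ext _ _ (fun _ => 0)), lsum_zero. apply sqrt_0. intros; ring. Qed.

Definition sg (c : R) : R := if Rle_dec 0 c then 1 else -1.
Lemma sg_sq c : sg c * sg c = 1.
Proof. unfold sg; destruct Rle_dec; ring. Qed.
Lemma sg_mul c : sg c * c = Rabs c.
Proof. unfold sg, Rabs; destruct Rle_dec, Rcase_abs; lra. Qed.

Lemma Rabs_le_1_sq c : Rabs c <= 1 -> 1 - Rabs c <= 1 - c * c.
Proof. intros H. pose proof (Rabs_pos c). assert (c * c = Rabs c * Rabs c) by (rewrite <- Rabs_mult, Rabs_pos_eq; nra). nra. Qed.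

Lemma sup_exists (E : R -> Prop) (M v0 : R) : E v0 -> (forall v, E v -> v <= M) -> exists m, is_lub E m.
Proof. intros H0 HM. destruct (completeness E) as [m Hm]. exists M; intros v Hv; auto. exists v0; auto. eauto. Qed.

Lemma lub_approx (E : R -> Prop) m eps : is_lub E m -> eps > 0 -> exists v, E v /\ m - eps < v.
Proof. intros [H1 H2] He. apply NNPP. intros Hno. assert (m <= m - eps); [|lra].
  apply H2. intros v Hv. apply Rnot_lt_le. intros Hlt. apply Hno. exists v; auto. Qed.

Definition cc n (xs : nat -> nat -> R) (j : nat) := vip n (xs j) (xs (S j)).
Fixpoint sgs n xs (k : nat) : R := match k with O => 1 | S k' => sgs n xs k' * sg (cc n xs k') end.
Lemma sgs_sq n xs k : sgs n xs k * sgs n xs k = 1.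
Proof. induction k; simpl; [ring|]. transitivity ((sgs n xs k * sgs n xs k) * (sg (cc n xs k) * sg (cc n xs k))). ring.
  rewrite IHk, sg_sq; ring. Qed.

Lemma chain_bound d n xs beta : unitv d n xs -> 0 <= beta ->
  (forall k, (S k < d)%nat -> 1 - cc n xs k * cc n xs k <= beta * beta / 2) ->
  forall k, (k < d)%nat -> vnorm n (vlin 1 (xs k) (- sgs n xs k) (xs O)) <= INR k * beta.
Proof. intros Hu Hb Hc. induction k; intros Hk.
  - simpl. rewrite (vnorm_ext n _ (fun _ => 0)). rewrite vnorm_zero_fun; lra. intros; unfold vlin; ring.
  - set (s := sg (cc n xs k)).
    rewrite (vnorm_ext n _ (vlin 1 (vlin 1 (xs (S k)) (- s) (xs k)) s (vlin 1 (xs k) (- sgs n xs k) (xs O)))).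
    2:{ intros i _. unfold vlin. simpl. fold s. ring. }
    pose proof (vnorm_triangle n 1 (vlin 1 (xs (S k)) (- s) (xs k)) s (vlin 1 (xs k) (- sgs n xs k) (xs O))).
    assert (Hs : Rabs s = 1). { unfold s, sg. destruct Rle_dec; [apply Rabs_R1|]. rewrite Rabs_left; lra. }
    rewrite Rabs_R1, Hs in H. pose proof (IHk ltac:(lia)).
    assert (vnorm n (vlin 1 (xs (S k)) (- s) (xs k)) <= beta).
    { apply vnorm_sq_le; auto. rewrite vip_lin_l, !vip_lin_r. rewrite (vip_sym n (xs (S k)) (xs k)).
      assert (vip n (xs k) (xs k) = 1) by (apply Hu; lia). assert (vip n (xs (S k)) (xs (S k)) = 1) by (apply Hu; lia).
      rewrite H1, H2. fold (cc n xs k). pose proof (sg_mul (cc n xs k)). fold s in H3. pose proof (sg_sq (cc n xs k)). fold s in H4.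
      pose proof (Hc k Hk). pose proof (unit_vip_bound n (xs k) (xs (S k)) (Hu k ltac:(lia)) (Hu (S k) Hk)). fold (cc n xs k) in H6.
      pose proof (Rabs_le_1_sq _ H6). nra. }
    rewrite S_INR. lra. Qed.

Lemma vnorm_opp n f : vnorm n (vlin (-1) f 0 f) = vnorm n f.
Proof. unfold vnorm. f_equal. rewrite vip_lin_l, !vip_lin_r. ring. Qed.

Definition rep n xs (j : nat) : nat -> nat -> R :=
  fun m => if Nat.ltb m j then (fun i => sgs n xs m * xs O i) else xs m.

Lemma rep_unit d n xs j : (1 <= d)%nat -> unitv d n xs -> unitv d n (rep n xs j).
Proof. intros Hd Hu m Hm. unfold rep. destruct (Nat.ltb m j); auto. unfold unit_vec.
  rewrite (lsum_ext _ _ (fun i => (sgs n xs m * sgs n xs m) * (xs O i * xs O i))). rewrite lsum_scal, sgs_sq.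
  rewrite Rmult_1_l. apply Hu; lia. intros; ring. Qed.

Lemma rep_chain d n q xs D : (1 <= n)%nat -> unitv d n xs -> 0 <= D ->
  (forall k, (k < d)%nat -> vnorm n (vlin 1 (xs k) (- sgs n xs k) (xs O)) <= D) ->
  forall j, (j <= d)%nat -> Rabs (Tm d n q (rep n xs j) - Tm d n q xs) <= spec_norm d n q * INR j * D.
Proof. intros Hn Hu HD HB. induction j; intros Hj.
  - assert (rep n xs 0 = xs) by (extensionality m; reflexivity). rewrite H. simpl. rewrite Rminus_diag, Rabs_R0. lra.
  - assert (Hd : (1 <= d)%nat) by lia.
    assert (E1 : rep n xs (S j) = upd (rep n xs j) j (fun i => sgs n xs j * xs O i)).
    { extensionality m. unfold rep, upd. destruct (Nat.eqb_spec m j).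
      subst. assert (Nat.ltb j (S j) = true) by (apply Nat.ltb_lt; lia). rewrite H; auto.
      destruct (Nat.ltb_spec m (S j)), (Nat.ltb_spec m j); auto; lia. }
    assert (E2 : rep n xs j = upd (rep n xs j) j (xs j)).
    { rewrite <- (upd_same (rep n xs j) j) at 1. f_equal. unfold rep. rewrite Nat.ltb_irrefl. auto. }
    assert (E3 : Tm d n q (rep n xs (S j)) - Tm d n q (rep n xs j) =
      Tm d n q (upd (rep n xs j) j (fun i => 1 * (fun i => sgs n xs j * xs O i) i + -1 * xs j i))).
    { rewrite Tm_lin by lia. rewrite <- E1, <- E2. ring. }
    assert (H : Rabs (Tm d n q (rep n xs (S j)) - Tm d n q (rep n xs j)) <= spec_norm d n q * vnorm n (fun i => 1 * (fun i => sgs n xs j * xs O i) i + -1 * xs j i)).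
    { rewrite E3. apply Tm_slot_abs; [auto| lia | apply rep_unit; auto]. }
    assert (vnorm n (fun i => 1 * (fun i => sgs n xs j * xs O i) i + -1 * xs j i) <= D).
    { rewrite <- (vnorm_opp n). rewrite (vnorm_ext n _ (vlin 1 (xs j) (- sgs n xs j) (xs O))). apply HB; lia.
      intros; unfold vlin; ring. }
    pose proof (IHj ltac:(lia)). pose proof (spec_nonneg d n q Hn Hd).
    assert (spec_norm d n q * vnorm n (fun i => 1 * (fun i => sgs n xs j * xs O i) i + -1 * xs j i) <= spec_norm d n q * D)
      by (apply Rmult_le_compat_l; auto).
    rewrite S_INR.
    replace (Tm d n q (rep n xs (S j)) - Tm d n q xs) with ((Tm d n q (rep n xs (S j)) - Tm d n q (rep n xs j)) + (Tm d n q (rep n xs j) - Tm d n q xs)) by ring.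
    eapply Rle_trans. apply Rabs_triang. lra. Qed.

Lemma rep_full d n q xs : Tm d n q (rep n xs d) = prodR d (sgs n xs) * Tm d n q (fun _ => xs O).
Proof. unfold Tm, frob_ip, outer. rewrite <- lsum_scal. apply lsum_ext. intros l Hl.
  apply In_idx in Hl as [Hlen _].
  rewrite (outer_from_ext_lt (rep n xs d) (fun m i => sgs n xs m * (fun _ => xs O) m i)).
  rewrite outer_from_scale. rewrite Hlen. simpl. match goal with |- ?a * (?b * ?c) = _ => transitivity (b * (a * c)); [ring|reflexivity] end.
  intros m _ Hm. unfold rep. rewrite Hlen in Hm. simpl in Hm. assert (Nat.ltb m d = true) by (apply Nat.ltb_lt; lia). rewrite H. reflexivity. Qed.

Lemma prodR_sgs_sq n xs d : prodR d (sgs n xs) * prodR d (sgs n xs) = 1.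
Proof. rewrite <- prodR_mult. apply prodR_one. intros; apply sgs_sq. Qed.

Lemma approx_banach d n q eta : is_sym d n q -> (1 <= n)%nat -> (1 <= d)%nat -> eta > 0 ->
  exists x s, unit_vec n x /\ s * s = 1 /\ spec_norm d n q - eta < s * Tm d n q (fun _ => x).
Proof. intros Hq Hn Hd He.
  set (N := spec_norm d n q). set (Dd := INR d).
  assert (HN : 0 <= N) by (apply spec_nonneg; auto).
  assert (HD : 1 <= Dd) by (unfold Dd; apply (le_INR 1 d) in Hd; simpl in Hd; lra).
  set (kap := eta / (12 * (Dd * Dd + 1))).
  assert (Hk : kap * (Dd * Dd + 1) = eta / 12) by (unfold kap; field; nra).
  assert (Hk0 : 0 < kap) by (unfold kap; apply Rdiv_lt_0_compat; nra).
  set (beta := Rmin 1 (eta / (3 * (N + 1) * (Dd * Dd + 1)))).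
  assert (Hb1 : beta <= 1) by apply Rmin_l.
  assert (Hb2 : beta * (3 * (N + 1) * (Dd * Dd + 1)) <= eta).
  { pose proof (Rmin_r 1 (eta / (3 * (N + 1) * (Dd * Dd + 1)))). fold beta in H.
    assert (0 < 3 * (N + 1) * (Dd * Dd + 1)) by nra.
    assert (eta / (3 * (N + 1) * (Dd * Dd + 1)) * (3 * (N + 1) * (Dd * Dd + 1)) = eta) by (field; nra).
    apply (Rmult_le_compat_r (3 * (N + 1) * (Dd * Dd + 1))) in H; lra. }
  assert (Hb0 : 0 < beta). { unfold beta. apply Rmin_pos. lra. apply Rdiv_lt_0_compat; nra. }
  set (theta := kap * beta * beta). assert (Ht : 0 < theta) by (unfold theta; apply Rmult_lt_0_compat; [apply Rmult_lt_0_compat|]; lra).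
  set (E := fun v => exists xs, unitv d n xs /\ v = Phi d n q kap xs).
  assert (Hu0 : unitv d n (fun _ => e0)) by (intros j _; now apply e0_unit).
  destruct (sup_exists E (N + kap * (Dd * Dd)) (Phi d n q kap (fun _ => e0))) as [m Hm].
  { exists (fun _ => e0); auto. }
  { intros v [xs [Hu ->]]. unfold Phi. pose proof (spec_ge d n q xs Hn Hu). pose proof (Pot_bound d n xs Hu). fold N Dd in H, H0. nra. }
  destruct (lub_approx E m theta Hm Ht) as [v [[xs [Hu ->]] Hv]].
  assert (C : forall k, (S k < d)%nat -> 1 - cc n xs k * cc n xs k <= beta * beta / 2).
  { intros k Hk1. destruct (Rlt_le_dec (Rabs (cc n xs k)) 1) as [L|L].
    - destruct (polarize d n q kap xs k Hq Hk1 ltac:(lra) Hu L) as [ys [Hys Hp]].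
      assert (Phi d n q kap ys <= m) by (apply Hm; exists ys; auto). unfold cc in *. unfold theta in Hv. nra.
    - pose proof (unit_vip_bound n (xs k) (xs (S k)) (Hu k ltac:(lia)) (Hu (S k) Hk1)). fold (cc n xs k) in H.
      assert (Rabs (cc n xs k) = 1) by lra. assert (cc n xs k * cc n xs k = 1).
      { assert (cc n xs k * cc n xs k = Rabs (cc n xs k) * Rabs (cc n xs k)) by (rewrite <- Rabs_mult; symmetry; apply Rabs_pos_eq; nra).
        rewrite H1, H0; ring. } nra. }
  assert (CB : forall k, (k < d)%nat -> vnorm n (vlin 1 (xs k) (- sgs n xs k) (xs O)) <= Dd * beta).
  { intros k Hk1. pose proof (chain_bound d n xs beta Hu ltac:(lra) C k Hk1).
    assert (INR k <= Dd) by (unfold Dd; apply le_INR; lia). nra. }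
  pose proof (rep_chain d n q xs (Dd * beta) Hn Hu ltac:(nra) CB d (le_n d)) as RC. fold N Dd in RC.
  rewrite rep_full in RC.
  destruct (spec_approx d n q theta Hn Ht) as [zs [Hzs Hz]]. fold N in Hz.
  assert (Phi d n q kap zs <= m) by (apply Hm; exists zs; auto).
  assert (Tm d n q zs <= Phi d n q kap zs) by (unfold Phi; pose proof (Pot_nonneg d n zs); nra).
  assert (Tm d n q xs >= m - theta - kap * (Dd * Dd)).
  { unfold Phi in Hv. pose proof (Pot_bound d n xs Hu). fold Dd in H1. nra. }
  exists (xs O), (prodR d (sgs n xs)). split. apply Hu; lia. split. apply prodR_sgs_sq.
  fold N. set (T1 := prodR d (sgs n xs) * Tm d n q (fun _ => xs O)) in *.
  pose proof (Rle_abs (Tm d n q xs - T1)). rewrite Rabs_minus_sym in H2.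
  assert (theta <= kap).
  { assert (beta * beta <= 1) by nra. unfold theta. rewrite Rmult_assoc.
    pose proof (Rmult_le_compat_l kap _ _ ltac:(lra) H3). lra. }
  assert (N * Dd * (Dd * beta) <= eta / 3).
  { assert (beta * ((N + 1) * (Dd * Dd + 1)) - N * Dd * (Dd * beta) = beta * (N + Dd * Dd + 1)) by ring.
    assert (0 <= beta * (N + Dd * Dd + 1)) by (apply Rmult_le_pos; nra). lra. }
  nra. Qed.

Definition Sym1 (x : nat -> R) (s : R) : tensor := tscale s (outer (fun _ => x)).

Lemma sym1_ip d n q x s : frob_ip d n q (Sym1 x s) = s * Tm d n q (fun _ => x).
Proof. unfold Sym1. apply ip_scale_r. Qed.

Lemma sym1_tuple d n q x s : (1 <= d)%nat -> Tm d n q (upd (fun _ => x) 0 (vlin s x 0 x)) = s * Tm d n q (fun _ => x).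
Proof. intros Hd. unfold vlin. rewrite Tm_lin by lia. rewrite (upd_same (fun _ => x) 0). ring. Qed.

Lemma sym1_unitv d n x s : unit_vec n x -> s * s = 1 -> unitv d n (upd (fun _ => x) 0 (vlin s x 0 x)).
Proof. intros Hx Hs. apply unitv_upd. intros j _; auto. unfold unit_vec.
  change (vip n (vlin s x 0 x) (vlin s x 0 x) = 1). rewrite vip_lin_l, !vip_lin_r. rewrite Hx. nra. Qed.

Lemma sym1_le d n q x s : (1 <= n)%nat -> (1 <= d)%nat -> unit_vec n x -> s * s = 1 ->
  frob_ip d n q (Sym1 x s) <= spec_norm d n q.
Proof. intros Hn Hd Hx Hs. rewrite sym1_ip, <- sym1_tuple by auto. apply spec_ge; auto. apply sym1_unitv; auto. Qed.

Lemma abs_s s : s * s = 1 -> Rabs s = 1.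
Proof. intros H. assert (Rabs s * Rabs s = 1) by (rewrite <- Rabs_mult, H; apply Rabs_R1).
  pose proof (Rabs_pos s). nra. Qed.

Lemma sym1_frob d n x s : unit_vec n x -> s * s = 1 -> frob d n (Sym1 x s) = 1.
Proof. intros Hx Hs. unfold Sym1. rewrite frob_scale, frob_outer_unit. rewrite abs_s; auto; ring. intros; auto. Qed.

Lemma sym1_sym d n x s : is_sym d n (Sym1 x s).
Proof. apply outer_const_sym. Qed.

Definition bvec (a : nat) : nat -> R := fun i => if Nat.eqb i a then 1 else 0.

Lemma lsum_delta (s : list nat) a F : NoDup s -> In a s -> lsum s (fun i => bvec a i * F i) = F a.
Proof. induction s as [|b s IH]; intros Hnd Hin; [destruct Hin|]. inversion Hnd; subst. rewrite lsum_cons.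
  unfold bvec at 1. destruct Hin as [<-|Hin].
  - rewrite Nat.eqb_refl. rewrite (lsum_ext _ _ (fun _ => 0)), lsum_zero. ring.
    intros x Hx. unfold bvec. destruct (Nat.eqb_spec x b); subst; [contradiction|ring].
  - destruct (Nat.eqb_spec b a); subst; [contradiction|]. rewrite IH; auto. ring. Qed.

Lemma bvec_unit n a : (a < n)%nat -> unit_vec n (bvec a).
Proof. intros H. unfold unit_vec.
  rewrite lsum_delta. unfold bvec; rewrite Nat.eqb_refl; auto. apply seq_NoDup. apply in_seq; lia. Qed.

Lemma extract_gen n l : Forall (fun i => (i < n)%nat) l -> forall A f j,
  (forall m, (m < length l)%nat -> f (j + m)%nat = nth m l 0%nat) ->
  frob_ip (length l) n A (outer_from (fun m => bvec (f m)) j) = A l.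
Proof. induction l as [|a l IH]; intros Hl A f j Hf.
  - unfold frob_ip. simpl. unfold lsum; simpl. ring.
  - inversion Hl; subst. simpl length. rewrite ip_outer_rec.
    assert (Hfa : f j = a) by (rewrite <- (Nat.add_0_r j); apply (Hf 0%nat); simpl; lia).
    rewrite Hfa. rewrite lsum_delta. apply (IH H2 (fun l' => A (a :: l')) f (S j)).
    intros m Hm. replace (nth m l 0%nat) with (nth (S m) (a :: l) 0%nat) by reflexivity. rewrite <- (Hf (S m)) by (simpl; lia). f_equal; lia.
    apply seq_NoDup. apply in_seq; lia. Qed.

Lemma spec_ge_entry d n A l : (1 <= n)%nat -> (1 <= d)%nat -> In l (idx d n) -> Rabs (A l) <= spec_norm d n A.
Proof. intros Hn Hd Hl. assert (Hu : unitv d n (fun m => bvec (nth m l 0%nat))).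
  { intros j Hj. apply In_idx in Hl as [H1 H2]. apply bvec_unit. apply Forall_nth; auto. lia. }
  pose proof (spec_abs d n A _ Hn Hd Hu). unfold Tm, outer in H. apply In_idx in Hl as [H1 H2].
  rewrite <- H1 in H |- *. rewrite extract_gen in H; auto. Qed.

Lemma spec_pos d n A : (1 <= n)%nat -> (1 <= d)%nat -> ~ teq d n A tzero -> 0 < spec_norm d n A.
Proof. intros Hn Hd H. apply NNPP. intros Hno. apply H. intros l Hl. unfold tzero.
  pose proof (spec_ge_entry d n A l Hn Hd Hl). pose proof (Rabs_pos (A l)).
  destruct (Req_dec (A l) 0); auto. exfalso. apply Rabs_no_R0 in H2. apply Hno. lra. Qed.

Lemma spec_scale d n c A : (1 <= n)%nat -> 0 < c -> spec_norm d n (tscale c A) = c * spec_norm d n A.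
Proof. intros Hn Hc. apply Rle_antisym.
  - apply spec_le; auto. intros xs Hu. rewrite Tm_scale. apply Rmult_le_compat_l; [lra|]. apply spec_ge; auto.
  - assert (spec_norm d n A <= / c * spec_norm d n (tscale c A)).
    { apply spec_le; auto. intros xs Hu. pose proof (spec_ge d n (tscale c A) xs Hn Hu). rewrite Tm_scale in H.
      apply (Rmult_le_compat_l (/ c)) in H. rewrite <- Rmult_assoc, Rinv_l in H; lra. left; apply Rinv_0_lt_compat; auto. }
    apply (Rmult_le_compat_l c) in H; [|lra]. rewrite <- Rmult_assoc, Rinv_r in H; lra. Qed.

Lemma is_sym_add d n A B : is_sym d n A -> is_sym d n B -> is_sym d n (tadd A B).
Proof. intros HA HB l l' Hl Hp. unfold tadd. rewrite (HA l l'), (HB l l'); auto. Qed.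
Lemma is_sym_scale d n c A : is_sym d n A -> is_sym d n (tscale c A).
Proof. intros HA l l' Hl Hp. unfold tscale. rewrite (HA l l'); auto. Qed.
Lemma is_sym_sub d n A B : is_sym d n A -> is_sym d n B -> is_sym d n (tsub A B).
Proof. intros HA HB l l' Hl Hp. unfold tsub. rewrite (HA l l'), (HB l l'); auto. Qed.

Lemma grad_approx d n q G eps : (1 <= n)%nat -> (1 <= d)%nat -> is_sym d n q ->
  is_grad d n (is_sym d n) (spec_norm d n) q G -> eps > 0 ->
  exists x s, unit_vec n x /\ s * s = 1 /\ frob d n (tsub G (Sym1 x s)) <= eps /\
    spec_norm d n q - eps <= frob_ip d n q (Sym1 x s).
Proof. intros Hn Hd Hq [HG Hgr] He.
  destruct (Hgr (eps / 2) ltac:(lra)) as [delta [Hdel Hh]].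
  set (FG := frob d n G). assert (HFG : 0 <= FG) by apply frob_nonneg.
  set (r := delta / (2 * (1 + FG))). assert (Hr : 0 < r) by (unfold r; apply Rdiv_lt_0_compat; lra).
  set (eta := Rmin eps (r * eps * eps / 2)).
  assert (Heta : 0 < eta) by (unfold eta; apply Rmin_pos; [lra|]; apply Rdiv_lt_0_compat; [|lra]; apply Rmult_lt_0_compat; [apply Rmult_lt_0_compat|]; lra).
  destruct (approx_banach d n q eta Hq Hn Hd Heta) as [x [s [Hx [Hs HT]]]].
  exists x, s. split; auto. split; auto.
  set (W := Sym1 x s). assert (HW : frob_ip d n q W = s * Tm d n q (fun _ => x)) by apply sym1_ip.
  assert (H1W : frob d n W = 1) by (apply sym1_frob; auto).
  set (D := frob d n (tsub W G)).
  assert (HD : D <= 1 + FG).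
  { unfold D. replace (tsub W G) with (tadd W (tscale (-1) G)).
    pose proof (frob_triangle d n W (tscale (-1) G)). rewrite frob_scale in H. replace (Rabs (-1)) with 1 in H. unfold FG. lra.
    rewrite Rabs_left; lra. extensionality l; unfold tadd, tsub, tscale; ring. }
  assert (HD0 : 0 <= D) by apply frob_nonneg.
  set (h := tscale r (tsub W G)).
  assert (Hsh : is_sym d n h) by (apply is_sym_scale, is_sym_sub; auto; apply sym1_sym).
  assert (Hfh : frob d n h = r * D) by (unfold h, D; rewrite frob_scale, Rabs_pos_eq; lra).
  assert (Hfh2 : frob d n h < delta).
  { rewrite Hfh. unfold r. assert (delta / (2 * (1 + FG)) * D <= delta / (2 * (1 + FG)) * (1 + FG)) by (apply Rmult_le_compat_l; [left; exact Hr| lra]).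
    assert (delta / (2 * (1 + FG)) * (1 + FG) = delta / 2) by (field; lra). lra. }
  specialize (Hh h Hsh Hfh2).
  assert (Hlow : frob_ip d n (tadd q h) W <= spec_norm d n (tadd q h)) by (apply sym1_le; auto).
  rewrite ip_add_l in Hlow.
  assert (Hip : frob_ip d n h W - frob_ip d n G h = r * (D * D)).
  { unfold h, D. rewrite ip_scale_l, ip_scale_r, frob_sq. rewrite !ip_sub_l, !ip_sub_r. rewrite (ip_sym d n G W). ring. }
  assert (Habs := Rle_abs (spec_norm d n (tadd q h) - spec_norm d n q - frob_ip d n G h)).
  assert (Heta1 : eta <= eps) by apply Rmin_l.
  assert (Heta2 : eta <= r * eps * eps / 2) by apply Rmin_r.
  split; [|lra].
  assert (Key : r * (D * D) < eta + eps / 2 * (r * D)).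
  { rewrite Hfh in Hh. fold W in HW. lra. }
  apply Rnot_lt_le. intros Hlt. fold W in Hlt. rewrite frob_sub_sym in Hlt. fold D in Hlt.
  assert (r * (D * D) - eps / 2 * (r * D) = r * D * (D - eps / 2)) by ring.
  assert (r * D * (D - eps / 2) >= r * eps * (eps / 2)).
  { apply Rle_ge. apply Rmult_le_compat; [left; apply Rmult_lt_0_compat; lra | lra | apply Rmult_le_compat_l; lra | lra]. }
  lra. Qed.

Lemma cv_const c : Un_cv (fun _ => c) c.
Proof. intros e He. exists 0%nat. intros. unfold Rdist. rewrite Rminus_diag, Rabs_R0. lra. Qed.

Lemma cv_lsum {A} (s : list A) (f : nat -> A -> R) F :
  (forall x, In x s -> Un_cv (fun j => f j x) (F x)) -> Un_cv (fun j => lsum s (f j)) (lsum s F).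
Proof. induction s; intros H. apply (cv_const 0). rewrite lsum_cons.
  apply (Un_cv_ext (fun j => f j a + lsum s (f j))). intros; now rewrite lsum_cons.
  apply CV_plus. apply H; now left. apply IHs; intros; apply H; now right. Qed.

Lemma cv_outer (y : nat -> nat -> R) Y k l : (forall i, In i l -> Un_cv (fun j => y j i) (Y i)) ->
  Un_cv (fun j => outer_from (fun _ => y j) k l) (outer_from (fun _ => Y) k l).
Proof. revert k; induction l; intros k H; simpl. apply cv_const. apply CV_mult. apply H; now left. apply IHl; intros; apply H; now right. Qed.

Lemma prodR_const_cv (a : nat -> R) A m : Un_cv a A -> Un_cv (fun j => prodR m (fun _ => a j)) (prodR m (fun _ => A)).
Proof. intros H. induction m; simpl. apply cv_const. apply CV_mult; auto. Qed.

Lemma lsum_ge_term {A} (s : list A) f a : (forall x, In x s -> 0 <= f x) -> In a s -> f a <= lsum s f.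
Proof. induction s; intros H Ha; [destruct Ha|]. rewrite lsum_cons. destruct Ha as [<-|Ha].
  assert (0 <= lsum s f) by (apply lsum_nonneg; intros; apply H; now right). lra.
  assert (0 <= f a0) by (apply H; now left). assert (f a <= lsum s f) by (apply IHs; auto; intros; apply H; now right). lra. Qed.

Lemma entry_le_frob d n A l : In l (idx d n) -> Rabs (A l) <= frob d n A.
Proof. intros Hl. rewrite <- sqrt_Rsqr_abs. apply sqrt_le_1_alt. unfold Rsqr.
  apply (lsum_ge_term (idx d n) (fun l => A l * A l)); auto. intros x _; apply (Rle_0_sqr (A x)). Qed.

Lemma tconv_entry d n W L l : tconv d n W L -> In l (idx d n) -> Un_cv (fun j => W j l) (L l).
Proof. intros H Hl e He. destruct (H e He) as [N HN]. exists N. intros m Hm. unfold Rdist.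
  pose proof (entry_le_frob d n (tsub (W m) L) l Hl). specialize (HN m Hm). unfold tsub in H0 at 1. cbv beta in H0. exact (Rle_lt_trans _ _ _ H0 HN). Qed.

Lemma prodR_const_mult m a b : prodR m (fun _ => a) * prodR m (fun _ => b) = prodR m (fun _ => a * b).
Proof. rewrite <- prodR_mult. reflexivity. Qed.

Lemma outer_from_const_ext (x : nat -> R) j k l : outer_from (fun _ => x) j l = outer_from (fun _ => x) k l.
Proof. revert j k; induction l; intros; simpl; auto. f_equal; auto. Qed.

Lemma sym1_identity d n x s rest l l' : unit_vec n x -> s * s = 1 -> length l = d -> length l' = d ->
  let W := Sym1 x s in let y := fun i => W (i :: rest) in
  W l * W l' * prodR d (fun _ => vip n y y) = outer_from (fun _ => y) 0 l * outer_from (fun _ => y) 0 l'.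
Proof. intros Hx Hs Hl Hl' W y.
  set (pi := outer_from (fun _ => x) 0 rest).
  assert (Ey : forall i, y i = (s * pi) * x i).
  { intros i. unfold y, W, Sym1, tscale, outer. simpl. unfold pi. rewrite (outer_from_const_ext x 1 0). ring. }
  assert (EN : vip n y y = pi * pi).
  { unfold vip, gip. rewrite (lsum_ext _ _ (fun i => (s * s * (pi * pi)) * (x i * x i))). rewrite lsum_scal.
    rewrite Hx, Hs. ring. intros i _. rewrite Ey. ring. }
  assert (EP : forall m, length m = d -> outer_from (fun _ => y) 0 m = prodR d (fun _ => s * pi) * outer_from (fun _ => x) 0 m).
  { intros m Hm. rewrite (outer_from_ext _ (fun m0 i => (fun _ => s * pi) m0 * (fun _ => x) m0 i)).
    rewrite outer_from_scale. rewrite Hm. reflexivity. intros; extensionality i; apply Ey. }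
  rewrite EN, !EP by auto. unfold W, Sym1, tscale, outer.
  transitivity ((s * s) * (outer_from (fun _ => x) 0 l * outer_from (fun _ => x) 0 l') * prodR d (fun _ => pi * pi)). ring.
  rewrite Hs.
  assert (E2 : prodR d (fun _ => s * pi) * prodR d (fun _ => s * pi) = prodR d (fun _ => pi * pi)).
  { rewrite prodR_const_mult. apply prodR_ext. intros; transitivity ((s * s) * (pi * pi)); [ring|rewrite Hs; ring]. }
  rewrite <- E2. ring. Qed.

Lemma prodR_const_pos m a : 0 < a -> 0 < prodR m (fun _ => a).
Proof. intros H; induction m; simpl; [lra|]. apply Rmult_lt_0_compat; auto. Qed.

Lemma closed_sym1 d n (xk : nat -> nat -> R) (sk : nat -> R) L : (1 <= n)%nat -> (1 <= d)%nat ->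
  (forall j, unit_vec n (xk j) /\ sk j * sk j = 1) -> tconv d n (fun j => Sym1 (xk j) (sk j)) L ->
  exists x s, unit_vec n x /\ s * s = 1 /\ teq d n L (Sym1 x s).
Proof. intros Hn Hd Hk Hc.
  set (W := fun j => Sym1 (xk j) (sk j)).
  assert (Hent : forall l, In l (idx d n) -> Un_cv (fun j => W j l) (L l)) by (intros; apply (tconv_entry d n); auto).
  assert (Hnz : exists l0, In l0 (idx d n) /\ L l0 <> 0).
  { apply NNPP. intros Hno. destruct (Hc (1/2) ltac:(lra)) as [N HN]. specialize (HN N (le_n N)).
    rewrite (frob_ext d n (tsub (Sym1 (xk N) (sk N)) L) (Sym1 (xk N) (sk N))) in HN. rewrite sym1_frob in HN by apply Hk. lra.
    intros l Hl. unfold tsub. destruct (Req_dec (L l) 0) as [E|E]. rewrite E; ring. exfalso; apply Hno; eauto. }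
  destruct Hnz as [l0 [Hl0 HL0]].
  destruct l0 as [|i0 rest]. { apply In_idx in Hl0 as [H _]. simpl in H. lia. }
  assert (Hrest : forall i, (i < n)%nat -> In (i :: rest) (idx d n)).
  { intros i Hi. apply In_idx in Hl0 as [H1 H2]. apply In_idx. split; auto. inversion H2; subst. constructor; auto. }
  set (y := fun i => L (i :: rest)).
  set (yj := fun j i => W j (i :: rest)).
  assert (Cy : forall i, (i < n)%nat -> Un_cv (fun j => yj j i) (y i)) by (intros i Hi; apply Hent; auto).
  set (N := vip n y y).
  assert (CN : Un_cv (fun j => vip n (yj j) (yj j)) N).
  { apply cv_lsum. intros i Hi. apply in_seq in Hi. apply CV_mult; apply Cy; lia. }
  set (PN := prodR d (fun _ => N)).
  set (P := fun l => outer_from (fun _ => y) 0 l).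
  assert (ID : forall l l', In l (idx d n) -> In l' (idx d n) -> L l * L l' * PN = P l * P l').
  { intros l l' Hl Hl'.
    pose proof Hl as Hl_. pose proof Hl' as Hl'_. apply In_idx in Hl_ as [Len1 F1]. apply In_idx in Hl'_ as [Len2 F2].
    assert (C1 : Un_cv (fun j => W j l * W j l' * prodR d (fun _ => vip n (yj j) (yj j))) (L l * L l' * PN)).
    { apply CV_mult. apply CV_mult; apply Hent; auto. apply prodR_const_cv; auto. }
    assert (C2 : Un_cv (fun j => outer_from (fun _ => yj j) 0 l * outer_from (fun _ => yj j) 0 l') (P l * P l')).
    { apply CV_mult; apply cv_outer; intros i Hi; apply Cy.
      eapply Forall_forall in F1; eauto. eapply Forall_forall in F2; eauto. }
    apply (UL_sequence (fun j => W j l * W j l' * prodR d (fun _ => vip n (yj j) (yj j)))); auto.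
    apply (Un_cv_ext (fun j => outer_from (fun _ => yj j) 0 l * outer_from (fun _ => yj j) 0 l')); auto.
    intros j. symmetry. destruct (Hk j). apply (sym1_identity d n (xk j) (sk j) rest l l'); auto. }
  assert (HN : 0 < N).
  { assert (y i0 * y i0 <= N).
    { apply (lsum_ge_term (seq 0 n) (fun i => y i * y i)). intros x _; apply (Rle_0_sqr (y x)).
      apply In_idx in Hl0 as [_ F]. inversion F; subst. apply in_seq; lia. }
    assert (0 < y i0 * y i0) by (unfold y; apply Rsqr_pos_lt; auto). lra. }
  assert (HPN : 0 < PN) by (apply prodR_const_pos; auto).
  pose proof (ID _ _ Hl0 Hl0) as I0. fold y in I0. unfold y in HL0.
  assert (HP0 : P (i0 :: rest) <> 0).
  { intro E. rewrite E in I0. assert (0 < L (i0 :: rest) * L (i0 :: rest) * PN).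
    apply Rmult_lt_0_compat; auto. apply Rsqr_pos_lt; auto. lra. }
  set (kap := P (i0 :: rest) / (L (i0 :: rest) * PN)).
  assert (HLk : forall l, In l (idx d n) -> L l = kap * P l).
  { intros l Hl. pose proof (ID l _ Hl Hl0). unfold kap. field_simplify_eq; [|split; lra]. lra. }
  set (sN := sqrt N). assert (HsN : 0 < sN) by (apply sqrt_lt_R0; auto).
  set (yh := fun i => y i / sN).
  assert (Uy : unit_vec n yh).
  { unfold unit_vec. rewrite (lsum_ext _ _ (fun i => / (sN * sN) * (y i * y i))). rewrite lsum_scal.
    change (lsum (seq 0 n) (fun i => y i * y i)) with N. unfold sN. rewrite sqrt_sqrt by lra. field; lra.
    intros; unfold yh; field; lra. }
  assert (HPy : forall l, length l = d -> P l = prodR d (fun _ => sN) * outer_from (fun _ => yh) 0 l).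
  { intros l Hl. unfold P. rewrite (outer_from_ext _ (fun m i => (fun _ => sN) m * (fun _ => yh) m i)).
    rewrite outer_from_scale, Hl. reflexivity. intros m _. extensionality i. unfold yh. field; lra. }
  exists yh, (kap * prodR d (fun _ => sN)). split; auto. split.
  - transitivity (kap * kap * (prodR d (fun _ => sN) * prodR d (fun _ => sN))). ring.
    rewrite prodR_const_mult. unfold sN. rewrite sqrt_sqrt by lra. fold PN.
    unfold kap. transitivity (P (i0 :: rest) * P (i0 :: rest) / (L (i0 :: rest) * L (i0 :: rest) * PN)). field; split; lra. rewrite <- I0. field. split; lra.
  - intros l Hl. rewrite HLk by auto. rewrite HPy. unfold Sym1, tscale, outer. ring.
    apply In_idx in Hl; tauto. Qed.

Lemma small_inv e : 0 < e -> exists N, forall j, (j >= N)%nat -> / (INR j + 1) < e.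
Proof. intros He. destruct (archimed_cor1 e He) as [N [H1 H2]]. exists N. intros j Hj.
  apply (le_INR N j) in Hj. assert (0 < INR N) by (apply lt_0_INR; lia).
  eapply Rle_lt_trans; [|exact H1]. apply Rinv_le_contravar; lra. Qed.

Lemma inv_pos_nat j : 0 < / (INR j + 1).
Proof. apply Rinv_0_lt_compat. pose proof (pos_INR j). lra. Qed.

Lemma frob_tri3 d n A B C : frob d n (tsub A C) <= frob d n (tsub A B) + frob d n (tsub B C).
Proof. rewrite (frob_ext d n (tsub A C) (tadd (tsub A B) (tsub B C))). apply frob_triangle.
  intros l _; unfold tsub, tadd; ring. Qed.

Lemma limgrad_char d n p L : (1 <= n)%nat -> (1 <= d)%nat ->
  limit_grad d n (is_sym d n) (spec_norm d n) p L ->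
  exists x s, unit_vec n x /\ s * s = 1 /\ teq d n L (Sym1 x s) /\
    frob_ip d n p (Sym1 x s) = spec_norm d n p.
Proof. intros Hn Hd [ps [Gs [Hk [Cp CG]]]].
  set (Pj := fun j (xs : (nat -> R) * R) => unit_vec n (fst xs) /\ snd xs * snd xs = 1 /\
     frob d n (tsub (Gs j) (Sym1 (fst xs) (snd xs))) <= / (INR j + 1) /\
     spec_norm d n (ps j) - / (INR j + 1) <= frob_ip d n (ps j) (Sym1 (fst xs) (snd xs))).
  assert (Ex : forall j, exists xs, Pj j xs).
  { intros j. destruct (Hk j) as [Hs Hg]. destruct (grad_approx d n (ps j) (Gs j) (/ (INR j + 1)) Hn Hd Hs Hg (inv_pos_nat j))
     as [x [s [H1 [H2 [H3 H4]]]]]. exists (x, s). unfold Pj; simpl; auto. }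
  set (f := fun j => epsilon (inhabits ((fun _ => 0), 0)) (Pj j)).
  assert (Hf : forall j, Pj j (f j)) by (intros j; apply epsilon_spec, Ex).
  set (W := fun j => Sym1 (fst (f j)) (snd (f j))).
  assert (CW : tconv d n W L).
  { intros e He. destruct (CG (e/2) ltac:(lra)) as [N1 HN1]. destruct (small_inv (e/2) ltac:(lra)) as [N2 HN2].
    exists (Nat.max N1 N2). intros j Hj. pose proof (frob_tri3 d n (W j) (Gs j) L).
    destruct (Hf j) as [_ [_ [H3 _]]]. rewrite frob_sub_sym in H3. fold (W j) in H3.
    specialize (HN1 j ltac:(lia)). specialize (HN2 j ltac:(lia)). lra. }
  destruct (closed_sym1 d n (fun j => fst (f j)) (fun j => snd (f j)) L Hn Hd) as [x [s [Hx [Hs HL]]]].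
  { intros j; destruct (Hf j) as [H1 [H2 _]]; auto. } exact CW.
  exists x, s. split; auto. split; auto. split; auto.
  apply Rle_antisym. apply sym1_le; auto.
  rewrite <- (ip_ext d n p p L (Sym1 x s)); [|intros l _; auto| auto].
  apply Rnot_lt_le. intros Hlt.
  set (delta := (spec_norm d n p - frob_ip d n p L) / 5). assert (Hdel : 0 < delta) by (unfold delta; lra).
  set (Fp := frob d n p). assert (HFp : 0 <= Fp) by apply frob_nonneg.
  destruct (Cp delta Hdel) as [N1 HN1]. destruct (CW (delta / (1 + Fp))) as [N2 HN2]. apply Rdiv_lt_0_compat; lra.
  destruct (small_inv delta Hdel) as [N3 HN3].
  set (j := Nat.max N1 (Nat.max N2 N3)).
  specialize (HN1 j ltac:(lia)). specialize (HN2 j ltac:(lia)). specialize (HN3 j ltac:(lia)).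
  destruct (Hf j) as [U1 [U2 [_ U4]]]. fold (W j) in U4.
  assert (HW1 : frob d n (W j) = 1) by (apply sym1_frob; auto).
  assert (E : frob_ip d n (ps j) (W j) - frob_ip d n p L = frob_ip d n (tsub (ps j) p) (W j) + frob_ip d n p (tsub (W j) L)).
  { rewrite ip_sub_l, ip_sub_r. ring. }
  pose proof (ip_le d n (tsub (ps j) p) (W j)). rewrite HW1 in H.
  pose proof (ip_CS d n p (tsub (W j) L)). fold Fp in H0. pose proof (Rle_abs (frob_ip d n p (tsub (W j) L))).
  pose proof (spec_lip_abs d n (ps j) p Hn). pose proof (Rle_abs (spec_norm d n p - spec_norm d n (ps j))). rewrite Rabs_minus_sym in H3.
  assert (Fp * frob d n (tsub (W j) L) <= delta).
  { assert (Fp * frob d n (tsub (W j) L) <= Fp * (delta / (1 + Fp))) by (apply Rmult_le_compat_l; lra).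
    assert (Fp * (delta / (1 + Fp)) <= delta). { apply (Rmult_le_reg_r (1 + Fp)); [lra|]. field_simplify; nra. }
    lra. }
  assert (spec_norm d n p - frob_ip d n p L = 5 * delta) by (unfold delta; field). lra. Qed.

Lemma upper_pert d n p u t h : (1 <= n)%nat -> 0 < t -> frob d n u = 1 ->
  (forall xs, unitv d n xs -> Tm d n p xs <= frob_ip d n p u) ->
  spec_norm d n (tadd (tadd p (tscale t u)) h) <= frob_ip d n p u + t + frob_ip d n u h + frob d n h * frob d n h / (2 * t).
Proof. intros Hn Ht Hu Hmax. apply spec_le; auto. intros xs Hxs.
  set (Z := outer xs). assert (HZ : frob d n Z = 1) by (apply frob_outer_unit; auto).
  unfold Tm. fold Z. rewrite !ip_add_l, ip_scale_l.
  pose proof (Hmax xs Hxs) as H1. unfold Tm in H1. fold Z in H1.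
  set (D := frob d n (tsub Z u)).
  assert (HD : D * D = 2 - 2 * frob_ip d n u Z).
  { unfold D. rewrite frob_sq, ip_sub_l, !ip_sub_r, <- (frob_sq d n Z), <- (frob_sq d n u), HZ, Hu, (ip_sym d n Z u). ring. }
  assert (H2 : frob_ip d n h Z - frob_ip d n u h <= frob d n h * D).
  { rewrite (ip_sym d n u h), <- ip_sub_r. apply ip_le. }
  pose proof (frob_nonneg d n h). pose proof (frob_nonneg d n (tsub Z u)). fold D in H0.
  assert (0 <= (t * D - frob d n h) * (t * D - frob d n h)) by apply Rle_0_sqr.
  assert (frob d n h * frob d n h / (2 * t) = / (2 * t) * (frob d n h * frob d n h)) by (unfold Rdiv; ring).
  assert (E : t * frob_ip d n u Z + frob d n h * D - frob d n h * frob d n h / (2 * t) <= t).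
  { rewrite H4. apply (Rmult_le_reg_l (2 * t)); [lra|]. field_simplify; [|lra].
    assert (EU : frob_ip d n u Z = 1 - D * D / 2) by lra. rewrite EU.
    assert (2 * t ^ 2 * (1 - D * D / 2) + 2 * t * frob d n h * D - frob d n h ^ 2 - 2 * t ^ 2 = - ((t * D - frob d n h) * (t * D - frob d n h))) by field.
    apply Rminus_le. rewrite H5. pose proof H3 as H6. lra. }
  lra. Qed.

Lemma maxgrad_limit d n (V : tensor -> Prop) p x s : (1 <= n)%nat -> (1 <= d)%nat -> unit_vec n x -> s * s = 1 ->
  (forall t, V (tadd p (tscale t (Sym1 x s)))) -> V (Sym1 x s) ->
  frob_ip d n p (Sym1 x s) = spec_norm d n p ->
  limit_grad d n V (spec_norm d n) p (Sym1 x s).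
Proof. intros Hn Hd Hx Hs HV HVu Hmax. set (u := Sym1 x s).
  assert (Hu : frob d n u = 1) by (apply sym1_frob; auto).
  assert (Huu : frob_ip d n u u = 1) by (rewrite <- frob_sq, Hu; ring).
  assert (Hm : forall xs, unitv d n xs -> Tm d n p xs <= frob_ip d n p u) by (intros; fold u in Hmax; rewrite Hmax; apply spec_ge; auto).
  exists (fun j => tadd p (tscale (/ (INR j + 1)) u)), (fun _ => u). split; [|split].
  - intros j. split; auto. set (t := / (INR j + 1)). assert (Ht : 0 < t) by apply inv_pos_nat.
    set (q := tadd p (tscale t u)).
    assert (Hq : spec_norm d n q = frob_ip d n p u + t).
    { apply Rle_antisym.
      - pose proof (upper_pert d n p u t tzero Hn Ht Hu Hm). rewrite frob_zero in H.
        rewrite (spec_ext d n (tadd (tadd p (tscale t u)) tzero) q) in H; auto. unfold frob_ip at 2 in H.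
        rewrite (lsum_ext _ _ (fun _ => 0)), lsum_zero in H. fold q. lra. intros; unfold tzero; ring.
        intros l _; unfold q, tadd, tzero; ring.
      - pose proof (sym1_le d n q x s Hn Hd Hx Hs). fold u in H. assert (frob_ip d n q u = frob_ip d n p u + t) by (unfold q; rewrite ip_add_l, ip_scale_l, Huu; ring). lra. }
    split; auto. intros eps He. exists (2 * t * eps). split. apply Rmult_lt_0_compat; lra.
    intros h Hh Hfh.
    pose proof (upper_pert d n p u t h Hn Ht Hu Hm) as Up. fold q in Up.
    assert (Lo : frob_ip d n (tadd q h) u <= spec_norm d n (tadd q h)) by (apply sym1_le; auto).
    unfold q in Lo. rewrite !ip_add_l, ip_scale_l, Huu in Lo. fold q in Lo.
    rewrite Hq. rewrite (ip_sym d n u h) in Up.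
    pose proof (frob_nonneg d n h).
    assert (frob d n h * frob d n h / (2 * t) <= eps * frob d n h).
    { apply (Rmult_le_reg_l (2 * t)); [lra|]. field_simplify; [|lra]. nra. }
    rewrite (ip_sym d n u h). apply Rabs_le. split; lra.
  - intros e He. destruct (small_inv e He) as [N HN]. exists N. intros j Hj.
    rewrite (frob_ext d n _ (tscale (/ (INR j + 1)) u)). rewrite frob_scale, Hu, Rabs_pos_eq. specialize (HN j Hj). lra.
    left; apply inv_pos_nat. intros l _; unfold tsub, tadd, tscale; ring.
  - intros e He. exists 0%nat. intros. rewrite (frob_ext d n _ tzero), frob_zero. lra. intros l _; unfold tsub, tzero; ring. Qed.

Lemma frob_sub_sq d n A B : frob d n (tsub A B) * frob d n (tsub A B) =
  frob d n A * frob d n A - 2 * frob_ip d n A B + frob d n B * frob d n B.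
Proof. rewrite !frob_sq, ip_sub_l, !ip_sub_r, (ip_sym d n B A). ring. Qed.

Lemma scale_outer_rank d n zs tau : (1 <= d)%nat ->
  teq d n (tscale tau (outer zs)) (outer (upd zs 0 (vlin tau (zs O) 0 (zs O)))).
Proof. intros Hd l Hl. apply In_idx in Hl as [Hlen _]. destruct l as [|i l']; simpl in Hlen; [lia|].
  unfold tscale, outer. simpl. rewrite upd_eq, outer_from_upd_irrel by lia. unfold vlin. ring. Qed.

Lemma teq_zero_frob d n A : teq d n A tzero -> frob d n A = 0.
Proof. intros H. rewrite (frob_ext d n A tzero H). apply frob_zero. Qed.

Lemma prodR_nonzero d f k : (k < d)%nat -> prodR d f <> 0 -> f k <> 0.
Proof. intros Hk H E. apply H. eapply prodR_zero; eauto. Qed.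

Lemma Tm_bound_gen d n A zs : (1 <= n)%nat -> (1 <= d)%nat -> Tm d n A zs <= spec_norm d n A * frob d n (outer zs).
Proof. intros Hn Hd. pose proof (spec_nonneg d n A Hn Hd). rewrite frob_outer.
  destruct (Req_dec (prodR d (fun k => vnorm n (zs k))) 0) as [Z|Z].
  - rewrite Z. pose proof (ip_le d n A (outer zs)). rewrite frob_outer, Z in H0. unfold Tm. lra.
  - set (c := fun k => vnorm n (zs k)). set (zh := fun m i => zs m i / c m).
    assert (Hc : forall k, (k < d)%nat -> c k <> 0) by (intros k Hk; apply (prodR_nonzero d c k Hk Z)).
    assert (Hcp : forall k, (k < d)%nat -> 0 < c k) by (intros k Hk; pose proof (vnorm_nonneg n (zs k)) as V1; pose proof (Hc k Hk) as V2; unfold c in V2 |- *; lra).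
    assert (E : Tm d n A zs = prodR d c * Tm d n A zh).
    { unfold Tm, frob_ip, outer. rewrite <- lsum_scal. apply lsum_ext. intros l Hl. apply In_idx in Hl as [Hlen _].
      rewrite (outer_from_ext_lt zs (fun m i => c m * zh m i)). rewrite outer_from_scale, Hlen. simpl. change (prodR d (fun k => c k)) with (prodR d c). ring.
      intros m _ Hm. rewrite Hlen in Hm. simpl in Hm. extensionality i. unfold zh. field. apply Hc; lia. }
    assert (Hu : unitv d n zh).
    { intros j Hj. unfold unit_vec. rewrite (lsum_ext _ _ (fun i => / (c j * c j) * (zs j i * zs j i))). rewrite lsum_scal.
      change (lsum (seq 0 n) (fun i => zs j i * zs j i)) with (vip n (zs j) (zs j)). rewrite <- vnorm_sq. fold (c j). field. apply Hc; auto.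
      intros i _. unfold zh. field. apply Hc; auto. }
    rewrite E. pose proof (spec_ge d n A zh Hn Hu). assert (0 <= prodR d c) by (apply prodR_nonneg; intros; apply vnorm_nonneg).
    fold c. nra. Qed.

Lemma sq_le_frob a b : 0 <= a -> 0 <= b -> a * a <= b * b -> a <= b.
Proof. intros. nra. Qed.

Lemma best_from_max d n A x s : (1 <= n)%nat -> (1 <= d)%nat -> unit_vec n x -> s * s = 1 ->
  0 < spec_norm d n A -> frob_ip d n A (Sym1 x s) = spec_norm d n A ->
  best_rank_one_approx d n A (tscale (spec_norm d n A) (Sym1 x s)) /\
  symmetric_rank_one_form d n (tscale (spec_norm d n A) (Sym1 x s)).
Proof. intros Hn Hd Hx Hs Hsig Hmax. set (sig := spec_norm d n A) in *. set (u := Sym1 x s) in *.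
  assert (Hu : frob d n u = 1) by (apply sym1_frob; auto).
  split; [split|].
  - split.
    + exists (upd (fun _ => x) 0 (vlin (sig * s) x 0 x)). intros l Hl.
      rewrite <- (scale_outer_rank d n (fun _ => x) (sig * s) Hd l Hl). unfold u, Sym1, tscale. ring.
    + intro H. apply teq_zero_frob in H. rewrite frob_scale, Hu, Rabs_pos_eq in H; lra.
  - intros X [[zs HX] _].
    assert (E1 : frob d n (tsub A (tscale sig u)) * frob d n (tsub A (tscale sig u)) = frob d n A * frob d n A - sig * sig).
    { rewrite frob_sub_sq, ip_scale_r, frob_scale, Rabs_pos_eq, Hu, Hmax by lra. ring. }
    assert (E2 : frob d n (tsub A X) * frob d n (tsub A X) = frob d n A * frob d n A - 2 * Tm d n A zs + frob d n (outer zs) * frob d n (outer zs)).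
    { rewrite frob_sub_sq. rewrite (ip_ext d n A A X (outer zs)), (frob_ext d n X (outer zs)); auto. intros l _; auto. }
    pose proof (Tm_bound_gen d n A zs Hn Hd). fold sig in H.
    apply sq_le_frob; try apply frob_nonneg. rewrite E1, E2. pose proof (frob_nonneg d n (outer zs)).
    assert (0 <= (sig - frob d n (outer zs)) * (sig - frob d n (outer zs))) by apply Rle_0_sqr. nra.
  - exists (sig * s), x. intros l _. unfold u, Sym1, tscale. ring. Qed.

Lemma abs_le0 x : Rabs x <= 0 -> x = 0.
Proof. unfold Rabs; destruct Rcase_abs; lra. Qed.

Lemma max_from_best d n A Y : (1 <= n)%nat -> (1 <= d)%nat ->
  best_rank_one_approx d n A Y -> symmetric_rank_one_form d n Y ->
  0 < spec_norm d n A /\ exists x s, unit_vec n x /\ s * s = 1 /\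
    teq d n Y (tscale (spec_norm d n A) (Sym1 x s)) /\ frob_ip d n A (Sym1 x s) = spec_norm d n A.
Proof. intros Hn Hd [[_ Hnz] Hbest] [lam [y Hy]].
  set (sig := spec_norm d n A). assert (Hs0 : 0 <= sig) by (apply spec_nonneg; auto).
  set (nu := vnorm n y). assert (Hnu0 : 0 <= nu) by apply vnorm_nonneg.
  assert (Hnu : 0 < nu).
  { destruct (Req_dec nu 0) as [E|E]; [|lra]. exfalso. apply Hnz. apply frob_zero_teq.
    rewrite (frob_ext d n Y _ Hy), frob_scale, frob_outer. rewrite (prodR_zero d _ 0%nat); [ring|lia|auto]. }
  set (x0 := fun i => y i / nu).
  assert (Hx0 : unit_vec n x0).
  { unfold unit_vec. rewrite (lsum_ext _ _ (fun i => / (nu * nu) * (y i * y i))). rewrite lsum_scal.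
    change (lsum (seq 0 n) (fun i => y i * y i)) with (vip n y y). rewrite <- vnorm_sq. fold nu. field. lra.
    intros i _. unfold x0. field. lra. }
  set (c := lam * prodR d (fun _ => nu)).
  assert (HY : teq d n Y (tscale c (Sym1 x0 1))).
  { intros l Hl. rewrite Hy by auto. apply In_idx in Hl as [Hlen _]. unfold tscale, Sym1, outer, c.
    rewrite (outer_from_ext _ (fun m i => (fun _ => nu) m * (fun _ => x0) m i)). rewrite outer_from_scale, Hlen. unfold tscale. change (fun _ i : nat => x0 i) with (fun _ : nat => x0). ring.
    intros m _. extensionality i. unfold x0. field. lra. }
  assert (Hu1 : frob d n (Sym1 x0 1) = 1) by (apply sym1_frob; auto; ring).
  set (w := frob_ip d n A (Sym1 x0 1)).
  assert (Hw : Rabs w <= sig).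
  { unfold w. rewrite sym1_ip, Rmult_1_l. apply spec_abs; auto. intros j _; auto. }
  assert (EY : frob d n (tsub A Y) * frob d n (tsub A Y) = frob d n A * frob d n A - 2 * c * w + c * c).
  { rewrite frob_sub_sq. rewrite (ip_ext d n A A Y _ (fun l _ => eq_refl) HY), (frob_ext d n Y _ HY).
    rewrite ip_scale_r, frob_scale, Hu1. fold w. rewrite Rmult_1_r. rewrite <- Rabs_mult, Rabs_pos_eq by nra. ring. }
  assert (Star : forall zs eps, unitv d n zs -> 0 < eps -> - 2 * c * w + c * c <= - 2 * eps * Tm d n A zs + eps * eps).
  { intros zs eps Hzs He. set (X := tscale eps (outer zs)).
    assert (HX : rank_one d n X).
    { split. exists (upd zs 0 (vlin eps (zs O) 0 (zs O))). apply scale_outer_rank; auto.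
      intro H. apply teq_zero_frob in H. unfold X in H. rewrite frob_scale, frob_outer_unit, Rabs_pos_eq in H; auto; lra. }
    pose proof (Hbest X HX).
    assert (EX : frob d n (tsub A X) * frob d n (tsub A X) = frob d n A * frob d n A - 2 * eps * Tm d n A zs + eps * eps).
    { rewrite frob_sub_sq. unfold X. rewrite ip_scale_r, frob_scale, frob_outer_unit, Rabs_pos_eq by (auto; lra). unfold Tm. ring. }
    assert (frob d n (tsub A Y) * frob d n (tsub A Y) <= frob d n (tsub A X) * frob d n (tsub A X)).
    { pose proof (frob_nonneg d n (tsub A Y)). apply Rmult_le_compat; auto. }
    lra. }
  assert (Hsig : 0 < sig).
  { destruct (Req_dec sig 0) as [E|E]; [|lra]. exfalso.
    assert (Ew : w = 0) by (pose proof (Rabs_pos w); apply abs_le0; lra).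
    assert (Hc : c = 0).
    { destruct (Req_dec c 0) as [Ec|Ec]; auto. exfalso.
      assert (Hu0 : unitv d n (fun _ => e0)) by (intros j _; now apply e0_unit).
      pose proof (spec_abs d n A _ Hn Hd Hu0). fold sig in H. rewrite E in H.
      assert (T0 : Tm d n A (fun _ => e0) = 0) by (pose proof (Rabs_pos (Tm d n A (fun _ => e0))); apply abs_le0; lra).
      assert (0 < Rabs c / 2) by (pose proof (Rabs_pos_lt c Ec); lra).
      pose proof (Star _ (Rabs c / 2) Hu0 H0). rewrite T0, Ew in H1.
      assert (c * c = Rabs c * Rabs c) by (rewrite <- Rabs_mult, Rabs_pos_eq; nra). nra. }
    apply Hnz. intros l Hl. rewrite HY by auto. unfold tscale, tzero. rewrite Hc. ring. }
  split; auto.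
  set (K := 2 * c * w - c * c).
  assert (HK : sig * sig <= K).
  { apply Rnot_lt_le. intros Hlt.
    set (ea := Rmin (sig / 2) ((sig * sig - K) / (4 * sig))).
    assert (Hea : 0 < ea) by (unfold ea; apply Rmin_pos; [lra|]; apply Rdiv_lt_0_compat; lra).
    assert (Hea1 : ea <= sig / 2) by apply Rmin_l.
    assert (Hea2 : ea * (4 * sig) <= sig * sig - K).
    { pose proof (Rmin_r (sig / 2) ((sig * sig - K) / (4 * sig))). fold ea in H.
      apply (Rmult_le_compat_r (4 * sig)) in H; [|lra]. replace ((sig * sig - K) / (4 * sig) * (4 * sig)) with (sig * sig - K) in H by (field; lra). lra. }
    destruct (spec_approx d n A ea Hn Hea) as [zs [Hzs HT]]. fold sig in HT.
    pose proof (Star zs (Tm d n A zs) Hzs ltac:(lra)). fold K in H.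
    assert (sig - ea < Tm d n A zs) by lra.
    assert ((sig - ea) * (sig - ea) < Tm d n A zs * Tm d n A zs) by (apply Rmult_le_0_lt_compat; lra).
    unfold K in *. nra. }
  assert (Hw2 : w * w <= sig * sig).
  { assert (w * w = Rabs w * Rabs w) by (rewrite <- Rabs_mult, Rabs_pos_eq; nra). pose proof (Rabs_pos w). nra. }
  assert (Hcw : c = w).
  { assert ((c - w) * (c - w) <= 0) by (unfold K in HK; nra). assert (0 <= (c - w) * (c - w)) by apply Rle_0_sqr. nra. }
  assert (Hw3 : w * w = sig * sig) by (unfold K in HK; rewrite Hcw in HK; nra).
  exists x0, (c / sig). split; auto. split. transitivity (c * c / (sig * sig)). field; lra. rewrite Hcw, Hw3. field. lra.
  split.
  - intros l Hl. rewrite HY by auto. unfold Sym1, tscale. field. lra.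
  - assert (Ew : w = Tm d n A (fun _ => x0)) by (unfold w; rewrite sym1_ip; ring).
    rewrite sym1_ip, <- Ew, Hcw. transitivity (w * w / sig). field; lra. rewrite Hw3. field. lra. Qed.

Lemma lsum_swap {A B} (s : list A) (t : list B) f :
  lsum s (fun a => lsum t (fun b => f a b)) = lsum t (fun b => lsum s (fun a => f a b)).
Proof. induction s; simpl. rewrite lsum_nil. symmetry. rewrite (lsum_ext _ _ (fun _ => 0)). apply lsum_zero. intros; apply lsum_nil.
  rewrite lsum_cons, IHs, <- lsum_plus. apply lsum_ext. intros; rewrite lsum_cons; ring. Qed.

Lemma ip_rsum d n P r c (T : nat -> tensor) :
  frob_ip d n P (fun l => rsum r (fun k => c k * T k l)) = rsum r (fun k => c k * frob_ip d n P (T k)).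
Proof. unfold frob_ip, rsum. rewrite (lsum_ext _ _ (fun l => lsum (seq 0 r) (fun k => P l * (c k * T k l)))).
  rewrite lsum_swap. apply lsum_ext. intros k _. rewrite <- lsum_scal. apply lsum_ext; intros; ring.
  intros l _. rewrite <- lsum_scal. reflexivity. Qed.

Lemma filter_pos r (c : nat -> R) (Y : nat -> tensor) (P : tensor -> Prop) :
  (forall k, (k < r)%nat -> 0 <= c k /\ P (Y k)) ->
  exists r' c' Y', (forall k, (k < r')%nat -> 0 < c' k /\ P (Y' k)) /\ rsum r' c' = rsum r c /\
    forall l, rsum r' (fun k => c' k * Y' k l) = rsum r (fun k => c k * Y k l).
Proof. induction r; intros H.
  - exists 0%nat, c, Y. split; [intros; lia|split; reflexivity].
  - destruct IHr as [r' [c' [Y' [H1 [H2 H3]]]]]. intros; apply H; lia.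
    destruct (H r (Nat.lt_succ_diag_r r)) as [Hc HP].
    destruct (Req_dec (c r) 0) as [E|E].
    + exists r', c', Y'. split; auto. split. rewrite rsum_S, E, H2; ring.
      intros l. rewrite rsum_S, E, H3. ring.
    + exists (S r'), (fun k => if Nat.eqb k r' then c r else c' k), (fun k => if Nat.eqb k r' then Y r else Y' k).
      split; [|split].
      * intros k Hk. destruct (Nat.eqb_spec k r'). split; [lra|auto]. apply H1; lia.
      * rewrite rsum_S, Nat.eqb_refl, rsum_S. rewrite <- H2. f_equal. apply rsum_ext. intros k Hk.
        destruct (Nat.eqb_spec k r'); [lia|auto].
      * intros l. rewrite rsum_S, Nat.eqb_refl, rsum_S, <- H3. f_equal. apply rsum_ext. intros k Hk.
        destruct (Nat.eqb_spec k r'); [lia|auto]. Qed.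

Lemma choice_lt (r : nat) (T : Type) (t0 : T) (P : nat -> T -> Prop) :
  (forall k, (k < r)%nat -> exists x, P k x) -> exists f : nat -> T, forall k, (k < r)%nat -> P k (f k).
Proof. intros H. exists (fun k => epsilon (inhabits t0) (fun x => (k < r)%nat -> P k x)).
  intros k Hk. apply (epsilon_spec (inhabits t0) (fun x => (k < r)%nat -> P k x)); auto.
  destruct (H k Hk) as [x Hx]. exists x; auto. Qed.

Theorem theorem1p9 (d n : nat) (A : tensor) :
  (1 <= d)%nat ->
  is_sym d n A ->
  ~ teq d n A tzero ->
  (critical d n (is_sym d n) A <->
   exists (r : nat) (Ys : nat -> tensor) (alpha : nat -> R),
     (forall k, (k < r)%nat ->
        best_rank_one_approx d n A (Ys k) /\
        symmetric_rank_one_form d n (Ys k) /\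
        0 < alpha k) /\
     rsum r alpha = 1 /\
     teq d n (tscale ((spec_norm d n A / frob d n A) ^ 2) A)
             (fun l => rsum r (fun k => alpha k * Ys k l)))
  /\
  (critical d n (is_sym d n) A -> critical d n (full_space d n) A).
Proof.
  intros Hd HA Hnz.
  assert (Hn : (1 <= n)%nat).
  { destruct n; [|lia]. exfalso. apply Hnz. intros l Hl. rewrite idx_nonempty_0 in Hl by auto. destruct Hl. }
  assert (HFA : 0 < frob d n A) by (apply frob_pos; auto).
  assert (Hsig : 0 < spec_norm d n A) by (apply spec_pos; auto).
  set (FA := frob d n A) in *. set (sig := spec_norm d n A) in *.
  set (p := tscale (/ FA) A).
  assert (Hgp : spec_norm d n p = / FA * sig) by (apply spec_scale; auto; apply Rinv_0_lt_compat; auto).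
  assert (Hp : is_sym d n p) by (apply is_sym_scale; auto).
  assert (HipA : forall T, frob_ip d n p T = / FA * frob_ip d n A T) by (intros; unfold p; apply ip_scale_l).
  assert (HpA : frob_ip d n p A = FA).
  { rewrite HipA, <- frob_sq. fold FA. field. lra. }
  assert (FWD : critical d n (is_sym d n) A -> exists r c xs ss,
     (forall k, (k < r)%nat -> 0 <= c k /\ unit_vec n (xs k) /\ ss k * ss k = 1 /\
         frob_ip d n p (Sym1 (xs k) (ss k)) = spec_norm d n p) /\ rsum r c = 1 /\
     teq d n (tscale (sig / (FA * FA)) A) (fun l => rsum r (fun k => c k * Sym1 (xs k) (ss k) l))).
  { intros [_ [lam [r [c [Ls [Hk [Hsum Heq]]]]]]]. fold FA p in Hk, Heq.
    destruct (choice_lt r _ ((fun _ => 0), 0) (fun k xs => unit_vec n (fst xs) /\ snd xs * snd xs = 1 /\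
       teq d n (Ls k) (Sym1 (fst xs) (snd xs)) /\ frob_ip d n p (Sym1 (fst xs) (snd xs)) = spec_norm d n p)) as [f Hf].
    { intros k Hk0. destruct (Hk k Hk0) as [_ HL]. destruct (limgrad_char d n p (Ls k) Hn Hd HL) as [x [s H]].
      exists (x, s); simpl; auto. }
    exists r, c, (fun k => fst (f k)), (fun k => snd (f k)).
    assert (Heq' : teq d n (tscale lam A) (fun l => rsum r (fun k => c k * Sym1 (fst (f k)) (snd (f k)) l))).
    { intros l Hl. rewrite Heq by auto. apply rsum_ext. intros k Hk0. destruct (Hf k Hk0) as [_ [_ [HT _]]]. rewrite HT; auto. }
    assert (Hlam : lam = sig / (FA * FA)).
    { pose proof (ip_ext d n p p _ _ (fun l _ => eq_refl) Heq') as H. rewrite ip_rsum, ip_scale_r, HpA in H.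
      rewrite (rsum_ext r _ (fun k => spec_norm d n p * c k)), rsum_scal, Hsum, Hgp in H.
      apply (Rmult_eq_reg_r FA); [|lra]. rewrite H. field. lra.
      intros k Hk0. destruct (Hf k Hk0) as [_ [_ [_ HM]]]. change (fun l : list nat => Sym1 (fst (f k)) (snd (f k)) l) with (Sym1 (fst (f k)) (snd (f k))). rewrite HM. ring. }
    split; [|split; auto].
    - intros k Hk0. destruct (Hf k Hk0) as [H1 [H2 [_ H4]]]. destruct (Hk k Hk0) as [H0 _]. auto.
    - rewrite <- Hlam. exact Heq'. }
  assert (Hmaxp : forall x s, frob_ip d n p (Sym1 x s) = spec_norm d n p -> frob_ip d n A (Sym1 x s) = sig).
  { intros x s H. rewrite HipA, Hgp in H. apply (Rmult_eq_reg_l (/ FA)); auto. apply Rinv_neq_0_compat; lra. }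
  split.
  - split.
    + intro Hc. destruct (FWD Hc) as [r [c [xs [ss [Hk [Hsum Heq]]]]]].
      set (Y := fun k => tscale sig (Sym1 (xs k) (ss k))).
      destruct (filter_pos r c Y (fun Y => best_rank_one_approx d n A Y /\ symmetric_rank_one_form d n Y)) as [r' [c' [Y' [H1 [H2 H3]]]]].
      { intros k Hk0. destruct (Hk k Hk0) as [H0 [Hx [Hs HM]]]. split; auto. unfold Y.
        apply best_from_max; auto. }
      exists r', Y', c'. split; [|split].
      * intros k Hk0. destruct (H1 k Hk0) as [Hc' [HB HS]]. auto.
      * rewrite H2; auto.
      * intros l Hl. rewrite H3. unfold Y, tscale. rewrite (rsum_ext r _ (fun k => sig * (c k * Sym1 (xs k) (ss k) l))).
        rewrite rsum_scal. rewrite <- Heq by auto. unfold tscale. field. lra. intros; ring.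
    + intros [r [Ys [alpha [Hk [Hsum Heq]]]]].
      destruct (choice_lt r _ ((fun _ => 0), 0) (fun k xs => unit_vec n (fst xs) /\ snd xs * snd xs = 1 /\
         teq d n (Ys k) (tscale sig (Sym1 (fst xs) (snd xs))) /\ frob_ip d n A (Sym1 (fst xs) (snd xs)) = sig)) as [f Hf].
      { intros k Hk0. destruct (Hk k Hk0) as [HB [HS _]]. destruct (max_from_best d n A (Ys k) Hn Hd HB HS) as [_ [x [s H]]].
        exists (x, s); simpl; auto. }
      split; auto. exists (sig / (FA * FA)), r, alpha, (fun k => Sym1 (fst (f k)) (snd (f k))). fold FA p.
      split; [|split; auto].
      * intros k Hk0. destruct (Hk k Hk0) as [_ [_ Ha]]. destruct (Hf k Hk0) as [H1 [H2 [_ H4]]]. split; [lra|].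
        apply maxgrad_limit; auto.
        intros t. apply is_sym_add; auto. apply is_sym_scale, sym1_sym. apply sym1_sym.
        rewrite HipA, H4, Hgp. reflexivity.
      * intros l Hl. pose proof (Heq l Hl) as E. unfold tscale in E |- *.
        rewrite (rsum_ext r _ (fun k => sig * (alpha k * Sym1 (fst (f k)) (snd (f k)) l))) in E.
        rewrite rsum_scal in E. apply (Rmult_eq_reg_l sig); [|lra]. rewrite <- E. field. lra.
        intros k Hk0. destruct (Hf k Hk0) as [_ [_ [HT _]]]. rewrite HT by auto. unfold tscale. ring.
  - intro Hc. destruct (FWD Hc) as [r [c [xs [ss [Hk [Hsum Heq]]]]]].
    split; auto. exists (sig / (FA * FA)), r, c, (fun k => Sym1 (xs k) (ss k)). fold FA p.
    split; [|split; auto].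
    intros k Hk0. destruct (Hk k Hk0) as [H0 [Hx [Hs HM]]]. split; auto.
    apply maxgrad_limit; auto; intros; exact I.
Qed.
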